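(* Let $e_1=(1:0:0)$, $e_2=(0:1:0)$, $e_3=(0:0:1)$, $e_4=(1:1:1)$, let $a\vee b$ denote the line through $a,b$, and set $\mathcal T_1=\{(e_1,e_1\vee e_3)\}$, $\mathcal T_2=\{e_2,(e_1,e_1\vee e_3)\}$, $\mathcal T_3=\{(e_1,e_1\vee e_3),(e_2,e_2\vee e_3)\}$, $\mathcal T_4=\{e_2,e_3,(e_1,e_1\vee e_4)\}$. Then for $i=1,2,3,4$ one has $\operatorname{span}(F_{\mathcal T_i})=I_{\mathcal T_i}$.
   Context: $H_k\subseteq\mathbb R[x,y,z]$: real ternary forms of degree $k$; $P_{3,4}=\{f\in H_4: f\ge0\text{ on }\mathbb P^2(\mathbb R)\}$. Local notation. For $p\in\mathbb P^2(\mathbb R)$, affine coordinates centered at $p$ are obtained by an invertible real linear change of coordinates sending $p$ to $(0:0:1)$ and setting $z=1$; $f\in H_4$ becomes $f(x,y)=\sum_{i+j\le4}a_{ij}x^iy^j$, and $\operatorname{ord}_p(f)$ is the least $i+j$ with $a_{ij}\ne0$. For a real line $l\ni p$ choose such coordinates with $l=\{y=0\}$, and for $\operatorname{ord}_pf\ge2$ put $\tilde f(x,y)=f(x,xy)/x^2$. Sets. $F_s=\{f\in P_{3,4}: f(s)=0\}$, $I_s=\{f\in H_4:\operatorname{ord}_sf\ge2\}$; $F_{(p,l)}=\{f\in P_{3,4}: f(p)=0,\ \tilde f(0,0)=0\}$, $I_{(p,l)}=\{f\in H_4: a_{00}=a_{10}=a_{01}=a_{20}=a_{11}=a_{30}=0\}$.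 For a configuration $\mathcal S=\{s_1,\dots,s_n,(p_1,l_1),\dots,(p_m,l_m)\}$ (pairwise distinct real points, real lines $l_j\ni p_j$): $F_{\mathcal S}=\bigcap_iF_{s_i}\cap\bigcap_jF_{(p_j,l_j)}$, $I_{\mathcal S}=\bigcap_iI_{s_i}\cap\bigcap_jI_{(p_j,l_j)}$. *)

(* Defs.v *)
From Stdlib Require Import Reals List.
Import ListNotations.
Open Scope R_scope.

(** Points of R^3 (homogeneous coordinates of points of P^2(R)). *)
Definition pt : Type := (R * R * R)%type.
Definition px (p : pt) : R := fst (fst p).
Definition py (p : pt) : R := snd (fst p).
Definition pz (p : pt) : R := snd p.
Definition dot (a b : pt) : R := px a * px b + py a * py b + pz a * pz b.
Definition cross (a b : pt) : pt :=
  (py a * pz b - pz a * py b, pz a * px b - px a * pz b, px a * py b - py a * px b).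
Definition smul (c : R) (a : pt) : pt := (c * px a, c * py a, c * pz a).

(** A real projective line is encoded by a normal vector n <> 0 :
    l = { v | dot n v = 0 }.  The line a \/ b through a,b has normal cross a b. *)
Definition on_line (n : pt) (v : pt) : Prop := dot n v = 0.
Definition join (a b : pt) : pt := cross a b.

Definition e1 : pt := (1, 0, 0).
Definition e2 : pt := (0, 1, 0).
Definition e3 : pt := (0, 0, 1).
Definition e4 : pt := (1, 1, 1).

Fixpoint sumR (n : nat) (g : nat -> R) : R :=
  match n with O => 0 | S k => sumR k g + g k end.

Definition quartic (c : nat -> nat -> R) (p : pt) : R :=
  sumR 5 (fun i => sumR (5 - i) (fun j =>
    c i j * px p ^ i * py p ^ j * pz p ^ (4 - i - j))).

Definition H4 (f : pt -> R) : Prop := exists c, forall p, f p = quartic c p.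

Definition P34 (f : pt -> R) : Prop := H4 f /\ forall p, 0 <= f p.

(** 3x3 real matrices (indices 0..2) acting on R^3. *)
Definition mat3 : Type := nat -> nat -> R.
Definition mapply (m : mat3) (v : pt) : pt :=
  (m 0%nat 0%nat * px v + m 0%nat 1%nat * py v + m 0%nat 2%nat * pz v,
   m 1%nat 0%nat * px v + m 1%nat 1%nat * py v + m 1%nat 2%nat * pz v,
   m 2%nat 0%nat * px v + m 2%nat 1%nat * py v + m 2%nat 2%nat * pz v).
Definition det3 (m : mat3) : R :=
  m 0%nat 0%nat * (m 1%nat 1%nat * m 2%nat 2%nat - m 1%nat 2%nat * m 2%nat 1%nat)
  - m 0%nat 1%nat * (m 1%nat 0%nat * m 2%nat 2%nat - m 1%nat 2%nat * m 2%nat 0%nat)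
  + m 0%nat 2%nat * (m 1%nat 0%nat * m 2%nat 1%nat - m 1%nat 1%nat * m 2%nat 0%nat).

(** An invertible linear change of coordinates: new coordinates v correspond
    to old coordinates [mapply m v].  It sends p to (0:0:1) iff m e3 is a
    nonzero multiple of p. *)
Definition centered_at (m : mat3) (p : pt) : Prop :=
  det3 m <> 0 /\ exists lam, lam <> 0 /\ mapply m e3 = smul lam p.

(** ... and additionally sends the line l (normal n, through p) to {y = 0}. *)
Definition centered_at_line (m : mat3) (p n : pt) : Prop :=
  centered_at m p /\ on_line n (mapply m e1).

Definition affine_poly (b : nat -> nat -> R) (x y : R) : R :=
  sumR 5 (fun i => sumR (5 - i) (fun j => b i j * x ^ i * y ^ j)).
Definition local_coeffs (f : pt -> R) (m : mat3) (b : nat -> nat -> R) : Prop :=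
  forall x y, f (mapply m (x, y, 1)) = affine_poly b x y.

Definition ord_ge2 (b : nat -> nat -> R) : Prop :=
  b 0%nat 0%nat = 0 /\ b 1%nat 0%nat = 0 /\ b 0%nat 1%nat = 0.

(** tilde f (x,y) = f(x,xy)/x^2 (for ord >= 2), as a polynomial. *)
Definition tilde_poly (b : nat -> nat -> R) (x y : R) : R :=
  sumR 5 (fun i => sumR (5 - i) (fun j =>
    if Nat.leb 2 (i + j) then b i j * x ^ (i + j - 2) * y ^ j else 0)).

Definition Fpt (s : pt) (f : pt -> R) : Prop := P34 f /\ f s = 0.
Definition Ipt (s : pt) (f : pt -> R) : Prop :=
  H4 f /\ exists m b, centered_at m s /\ local_coeffs f m b /\ ord_ge2 b.

Definition Fpl (p n : pt) (f : pt -> R) : Prop :=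
  P34 f /\ f p = 0 /\
  exists m b, centered_at_line m p n /\ local_coeffs f m b /\ ord_ge2 b /\
              tilde_poly b 0 0 = 0.
Definition Ipl (p n : pt) (f : pt -> R) : Prop :=
  H4 f /\ exists m b, centered_at_line m p n /\ local_coeffs f m b /\
    b 0%nat 0%nat = 0 /\ b 1%nat 0%nat = 0 /\ b 0%nat 1%nat = 0 /\
    b 2%nat 0%nat = 0 /\ b 1%nat 1%nat = 0 /\ b 3%nat 0%nat = 0.

Record config : Type := Config { cpts : list pt; cpairs : list (pt * pt) }.

Definition FS (S : config) (f : pt -> R) : Prop :=
  (forall s, In s (cpts S) -> Fpt s f) /\
  (forall q, In q (cpairs S) -> Fpl (fst q) (snd q) f).
Definition IS (S : config) (f : pt -> R) : Prop :=
  H4 f /\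
  (forall s, In s (cpts S) -> Ipt s f) /\
  (forall q, In q (cpairs S) -> Ipl (fst q) (snd q) f).

Fixpoint lincomb (l : list (R * (pt -> R))) (p : pt) : R :=
  match l with
  | [] => 0
  | (a, g) :: t => a * g p + lincomb t p
  end.
Definition in_span (F : (pt -> R) -> Prop) (f : pt -> R) : Prop :=
  exists l : list (R * (pt -> R)),
    (forall q, In q l -> F (snd q)) /\ forall p, f p = lincomb l p.

Definition T1 : config := Config [] [(e1, join e1 e3)].
Definition T2 : config := Config [e2] [(e1, join e1 e3)].
Definition T3 : config := Config [] [(e1, join e1 e3); (e2, join e2 e3)].
Definition T4 : config := Config [e2; e3] [(e1, join e1 e4)].
Definition Tconf (i : nat) : config :=
  match i with 1 => T1 | 2 => T2 | 3 => T3 | _ => T4 end.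

(* Main.v *)
Require Import Defs.
From Stdlib Require Import Reals List Lra Lia Psatz.
Import ListNotations.
Open Scope R_scope.
Definition BE1 (l a b d g e f : R) (c : nat -> nat -> R) (i j : nat) : R :=
  match i, j with
  | 0%nat, 0%nat => (1)*l^4*c 4%nat 0%nat
  | 0%nat, 1%nat => (1)*l^3*f*c 3%nat 0%nat + (1)*l^3*g*c 3%nat 1%nat + (4)*l^3*b*c 4%nat 0%nat
  | 0%nat, 2%nat => (1)*l^2*f^2*c 2%nat 0%nat + (1)*l^2*g*f*c 2%nat 1%nat + (1)*l^2*g^2*c 2%nat 2%nat + (3)*l^2*b*f*c 3%nat 0%nat + (3)*l^2*b*g*c 3%nat 1%nat + (6)*l^2*b^2*c 4%nat 0%nat
  | 0%nat, 3%nat => (1)*l*f^3*c 1%nat 0%nat + (1)*l*g*f^2*c 1%nat 1%nat + (1)*l*g^2*f*c 1%nat 2%nat + (1)*l*g^3*c 1%nat 3%nat + (2)*l*b*f^2*c 2%nat 0%nat + (2)*l*b*g*f*c 2%nat 1%nat + (2)*l*b*g^2*c 2%nat 2%nat + (3)*l*b^2*f*c 3%nat 0%nat + (3)*l*b^2*g*c 3%nat 1%nat + (4)*l*b^3*c 4%nat 0%nat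
  | 0%nat, 4%nat => (1)*f^4*c 0%nat 0%nat + (1)*g*f^3*c 0%nat 1%nat + (1)*g^2*f^2*c 0%nat 2%nat + (1)*g^3*f*c 0%nat 3%nat + (1)*g^4*c 0%nat 4%nat + (1)*b*f^3*c 1%nat 0%nat + (1)*b*g*f^2*c 1%nat 1%nat + (1)*b*g^2*f*c 1%nat 2%nat + (1)*b*g^3*c 1%nat 3%nat + (1)*b^2*f^2*c 2%nat 0%nat + (1)*b^2*g*f*c 2%nat 1%nat + (1)*b^2*g^2*c 2%nat 2%nat + (1)*b^3*f*c 3%nat 0%nat + (1)*b^3*g*c 3%nat 1%nat + (1)*b^4*c 4%nat 0%nat
  | 1%nat, 0%nat => (1)*l^3*e*c 3%nat 0%nat + (1)*l^3*d*c 3%nat 1%nat + (4)*l^3*a*c 4%nat 0%nat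
  | 1%nat, 1%nat => (2)*l^2*e*f*c 2%nat 0%nat + (1)*l^2*d*f*c 2%nat 1%nat + (1)*l^2*g*e*c 2%nat 1%nat + (2)*l^2*d*g*c 2%nat 2%nat + (3)*l^2*a*f*c 3%nat 0%nat + (3)*l^2*b*e*c 3%nat 0%nat + (3)*l^2*a*g*c 3%nat 1%nat + (3)*l^2*b*d*c 3%nat 1%nat + (12)*l^2*a*b*c 4%nat 0%nat
  | 1%nat, 2%nat => (3)*l*e*f^2*c 1%nat 0%nat + (1)*l*d*f^2*c 1%nat 1%nat + (2)*l*g*e*f*c 1%nat 1%nat + (2)*l*d*g*f*c 1%nat 2%nat + (1)*l*g^2*e*c 1%nat 2%nat + (3)*l*d*g^2*c 1%nat 3%nat + (2)*l*a*f^2*c 2%nat 0%nat + (4)*l*b*e*f*c 2%nat 0%nat + (2)*l*a*g*f*c 2%nat 1%nat + (2)*l*b*d*f*c 2%nat 1%nat + (2)*l*b*g*e*c 2%nat 1%nat + (2)*l*a*g^2*c 2%nat 2%nat + (4)*l*b*d*g*c 2%nat 2%nat + (6)*l*a*b*f*c 3%nat 0%nat + (3)*l*b^2*e*c 3%nat 0%nat + (6)*l*a*b*g*c 3%nat 1%nat + (3)*l*b^2*d*c 3%nat 1%nat + (12)*l*a*b^2*c 4%nat 0%nat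
  | 1%nat, 3%nat => (4)*e*f^3*c 0%nat 0%nat + (1)*d*f^3*c 0%nat 1%nat + (3)*g*e*f^2*c 0%nat 1%nat + (2)*d*g*f^2*c 0%nat 2%nat + (2)*g^2*e*f*c 0%nat 2%nat + (3)*d*g^2*f*c 0%nat 3%nat + (1)*g^3*e*c 0%nat 3%nat + (4)*d*g^3*c 0%nat 4%nat + (1)*a*f^3*c 1%nat 0%nat + (3)*b*e*f^2*c 1%nat 0%nat + (1)*a*g*f^2*c 1%nat 1%nat + (1)*b*d*f^2*c 1%nat 1%nat + (2)*b*g*e*f*c 1%nat 1%nat + (1)*a*g^2*f*c 1%nat 2%nat + (2)*b*d*g*f*c 1%nat 2%nat + (1)*b*g^2*e*c 1%nat 2%nat + (1)*a*g^3*c 1%nat 3%nat + (3)*b*d*g^2*c 1%nat 3%nat + (2)*a*b*f^2*c 2%nat 0%nat + (2)*b^2*e*f*c 2%nat 0%nat + (2)*a*b*g*f*c 2%nat 1%nat + (1)*b^2*d*f*c 2%nat 1%nat + (1)*b^2*g*e*c 2%nat 1%nat + (2)*a*b*g^2*c 2%nat 2%nat + (2)*b^2*d*g*c 2%nat 2%nat + (3)*a*b^2*f*c 3%nat 0%nat + (1)*b^3*e*c 3%nat 0%nat + (3)*a*b^2*g*c 3%nat 1%nat + (1)*b^3*d*c 3%nat 1%nat + (4)*a*b^3*c 4%nat 0%nat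
  | 2%nat, 0%nat => (1)*l^2*e^2*c 2%nat 0%nat + (1)*l^2*d*e*c 2%nat 1%nat + (1)*l^2*d^2*c 2%nat 2%nat + (3)*l^2*a*e*c 3%nat 0%nat + (3)*l^2*a*d*c 3%nat 1%nat + (6)*l^2*a^2*c 4%nat 0%nat
  | 2%nat, 1%nat => (3)*l*e^2*f*c 1%nat 0%nat + (2)*l*d*e*f*c 1%nat 1%nat + (1)*l*g*e^2*c 1%nat 1%nat + (1)*l*d^2*f*c 1%nat 2%nat + (2)*l*d*g*e*c 1%nat 2%nat + (3)*l*d^2*g*c 1%nat 3%nat + (4)*l*a*e*f*c 2%nat 0%nat + (2)*l*b*e^2*c 2%nat 0%nat + (2)*l*a*d*f*c 2%nat 1%nat + (2)*l*a*g*e*c 2%nat 1%nat + (2)*l*b*d*e*c 2%nat 1%nat + (4)*l*a*d*g*c 2%nat 2%nat + (2)*l*b*d^2*c 2%nat 2%nat + (3)*l*a^2*f*c 3%nat 0%nat + (6)*l*a*b*e*c 3%nat 0%nat + (3)*l*a^2*g*c 3%nat 1%nat + (6)*l*a*b*d*c 3%nat 1%nat + (12)*l*a^2*b*c 4%nat 0%nat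
  | 2%nat, 2%nat => (6)*e^2*f^2*c 0%nat 0%nat + (3)*d*e*f^2*c 0%nat 1%nat + (3)*g*e^2*f*c 0%nat 1%nat + (1)*d^2*f^2*c 0%nat 2%nat + (4)*d*g*e*f*c 0%nat 2%nat + (1)*g^2*e^2*c 0%nat 2%nat + (3)*d^2*g*f*c 0%nat 3%nat + (3)*d*g^2*e*c 0%nat 3%nat + (6)*d^2*g^2*c 0%nat 4%nat + (3)*a*e*f^2*c 1%nat 0%nat + (3)*b*e^2*f*c 1%nat 0%nat + (1)*a*d*f^2*c 1%nat 1%nat + (2)*a*g*e*f*c 1%nat 1%nat + (2)*b*d*e*f*c 1%nat 1%nat + (1)*b*g*e^2*c 1%nat 1%nat + (2)*a*d*g*f*c 1%nat 2%nat + (1)*a*g^2*e*c 1%nat 2%nat + (1)*b*d^2*f*c 1%nat 2%nat + (2)*b*d*g*e*c 1%nat 2%nat + (3)*a*d*g^2*c 1%nat 3%nat + (3)*b*d^2*g*c 1%nat 3%nat + (1)*a^2*f^2*c 2%nat 0%nat + (4)*a*b*e*f*c 2%nat 0%nat + (1)*b^2*e^2*c 2%nat 0%nat + (1)*a^2*g*f*c 2%nat 1%nat + (2)*a*b*d*f*c 2%nat 1%nat + (2)*a*b*g*e*c 2%nat 1%nat + (1)*b^2*d*e*c 2%nat 1%nat + (1)*a^2*g^2*c 2%nat 2%nat + (4)*a*b*d*g*c 2%nat 2%nat + (1)*b^2*d^2*c 2%nat 2%nat + (3)*a^2*b*f*c 3%nat 0%nat + (3)*a*b^2*e*c 3%nat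 0%nat + (3)*a^2*b*g*c 3%nat 1%nat + (3)*a*b^2*d*c 3%nat 1%nat + (6)*a^2*b^2*c 4%nat 0%nat
  | 3%nat, 0%nat => (1)*l*e^3*c 1%nat 0%nat + (1)*l*d*e^2*c 1%nat 1%nat + (1)*l*d^2*e*c 1%nat 2%nat + (1)*l*d^3*c 1%nat 3%nat + (2)*l*a*e^2*c 2%nat 0%nat + (2)*l*a*d*e*c 2%nat 1%nat + (2)*l*a*d^2*c 2%nat 2%nat + (3)*l*a^2*e*c 3%nat 0%nat + (3)*l*a^2*d*c 3%nat 1%nat + (4)*l*a^3*c 4%nat 0%nat
  | 3%nat, 1%nat => (4)*e^3*f*c 0%nat 0%nat + (3)*d*e^2*f*c 0%nat 1%nat + (1)*g*e^3*c 0%nat 1%nat + (2)*d^2*e*f*c 0%nat 2%nat + (2)*d*g*e^2*c 0%nat 2%nat + (1)*d^3*f*c 0%nat 3%nat + (3)*d^2*g*e*c 0%nat 3%nat + (4)*d^3*g*c 0%nat 4%nat + (3)*a*e^2*f*c 1%nat 0%nat + (1)*b*e^3*c 1%nat 0%nat + (2)*a*d*e*f*c 1%nat 1%nat + (1)*a*g*e^2*c 1%nat 1%nat + (1)*b*d*e^2*c 1%nat 1%nat + (1)*a*d^2*f*c 1%nat 2%nat + (2)*a*d*g*e*c 1%nat 2%nat + (1)*b*d^2*e*c 1%nat 2%nat + (3)*a*d^2*g*c 1%nat 3%nat + (1)*b*d^3*c 1%nat 3%nat + (2)*a^2*e*f*c 2%nat 0%nat + (2)*a*b*e^2*c 2%nat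 0%nat + (1)*a^2*d*f*c 2%nat 1%nat + (1)*a^2*g*e*c 2%nat 1%nat + (2)*a*b*d*e*c 2%nat 1%nat + (2)*a^2*d*g*c 2%nat 2%nat + (2)*a*b*d^2*c 2%nat 2%nat + (1)*a^3*f*c 3%nat 0%nat + (3)*a^2*b*e*c 3%nat 0%nat + (1)*a^3*g*c 3%nat 1%nat + (3)*a^2*b*d*c 3%nat 1%nat + (4)*a^3*b*c 4%nat 0%nat
  | 4%nat, 0%nat => (1)*e^4*c 0%nat 0%nat + (1)*d*e^3*c 0%nat 1%nat + (1)*d^2*e^2*c 0%nat 2%nat + (1)*d^3*e*c 0%nat 3%nat + (1)*d^4*c 0%nat 4%nat + (1)*a*e^3*c 1%nat 0%nat + (1)*a*d*e^2*c 1%nat 1%nat + (1)*a*d^2*e*c 1%nat 2%nat + (1)*a*d^3*c 1%nat 3%nat + (1)*a^2*e^2*c 2%nat 0%nat + (1)*a^2*d*e*c 2%nat 1%nat + (1)*a^2*d^2*c 2%nat 2%nat + (1)*a^3*e*c 3%nat 0%nat + (1)*a^3*d*c 3%nat 1%nat + (1)*a^4*c 4%nat 0%nat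
  | _, _ => 0 end.

Definition BE2 (l a b d g e f : R) (c : nat -> nat -> R) (i j : nat) : R :=
  match i, j with
  | 0%nat, 0%nat => (1)*l^4*c 0%nat 4%nat
  | 0%nat, 1%nat => (1)*l^3*f*c 0%nat 3%nat + (4)*l^3*g*c 0%nat 4%nat + (1)*l^3*b*c 1%nat 3%nat
  | 0%nat, 2%nat => (1)*l^2*f^2*c 0%nat 2%nat + (3)*l^2*g*f*c 0%nat 3%nat + (6)*l^2*g^2*c 0%nat 4%nat + (1)*l^2*b*f*c 1%nat 2%nat + (3)*l^2*b*g*c 1%nat 3%nat + (1)*l^2*b^2*c 2%nat 2%nat
  | 0%nat, 3%nat => (1)*l*f^3*c 0%nat 1%nat + (2)*l*g*f^2*c 0%nat 2%nat + (3)*l*g^2*f*c 0%nat 3%nat + (4)*l*g^3*c 0%nat 4%nat + (1)*l*b*f^2*c 1%nat 1%nat + (2)*l*b*g*f*c 1%nat 2%nat + (3)*l*b*g^2*c 1%nat 3%nat + (1)*l*b^2*f*c 2%nat 1%nat + (2)*l*b^2*g*c 2%nat 2%nat + (1)*l*b^3*c 3%nat 1%nat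
  | 0%nat, 4%nat => (1)*f^4*c 0%nat 0%nat + (1)*g*f^3*c 0%nat 1%nat + (1)*g^2*f^2*c 0%nat 2%nat + (1)*g^3*f*c 0%nat 3%nat + (1)*g^4*c 0%nat 4%nat + (1)*b*f^3*c 1%nat 0%nat + (1)*b*g*f^2*c 1%nat 1%nat + (1)*b*g^2*f*c 1%nat 2%nat + (1)*b*g^3*c 1%nat 3%nat + (1)*b^2*f^2*c 2%nat 0%nat + (1)*b^2*g*f*c 2%nat 1%nat + (1)*b^2*g^2*c 2%nat 2%nat + (1)*b^3*f*c 3%nat 0%nat + (1)*b^3*g*c 3%nat 1%nat + (1)*b^4*c 4%nat 0%nat
  | 1%nat, 0%nat => (1)*l^3*e*c 0%nat 3%nat + (4)*l^3*d*c 0%nat 4%nat + (1)*l^3*a*c 1%nat 3%nat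
  | 1%nat, 1%nat => (2)*l^2*e*f*c 0%nat 2%nat + (3)*l^2*d*f*c 0%nat 3%nat + (3)*l^2*g*e*c 0%nat 3%nat + (12)*l^2*d*g*c 0%nat 4%nat + (1)*l^2*a*f*c 1%nat 2%nat + (1)*l^2*b*e*c 1%nat 2%nat + (3)*l^2*a*g*c 1%nat 3%nat + (3)*l^2*b*d*c 1%nat 3%nat + (2)*l^2*a*b*c 2%nat 2%nat
  | 1%nat, 2%nat => (3)*l*e*f^2*c 0%nat 1%nat + (2)*l*d*f^2*c 0%nat 2%nat + (4)*l*g*e*f*c 0%nat 2%nat + (6)*l*d*g*f*c 0%nat 3%nat + (3)*l*g^2*e*c 0%nat 3%nat + (12)*l*d*g^2*c 0%nat 4%nat + (1)*l*a*f^2*c 1%nat 1%nat + (2)*l*b*e*f*c 1%nat 1%nat + (2)*l*a*g*f*c 1%nat 2%nat + (2)*l*b*d*f*c 1%nat 2%nat + (2)*l*b*g*e*c 1%nat 2%nat + (3)*l*a*g^2*c 1%nat 3%nat + (6)*l*b*d*g*c 1%nat 3%nat + (2)*l*a*b*f*c 2%nat 1%nat + (1)*l*b^2*e*c 2%nat 1%nat + (4)*l*a*b*g*c 2%nat 2%nat + (2)*l*b^2*d*c 2%nat 2%nat + (3)*l*a*b^2*c 3%nat 1%nat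
  | 1%nat, 3%nat => (4)*e*f^3*c 0%nat 0%nat + (1)*d*f^3*c 0%nat 1%nat + (3)*g*e*f^2*c 0%nat 1%nat + (2)*d*g*f^2*c 0%nat 2%nat + (2)*g^2*e*f*c 0%nat 2%nat + (3)*d*g^2*f*c 0%nat 3%nat + (1)*g^3*e*c 0%nat 3%nat + (4)*d*g^3*c 0%nat 4%nat + (1)*a*f^3*c 1%nat 0%nat + (3)*b*e*f^2*c 1%nat 0%nat + (1)*a*g*f^2*c 1%nat 1%nat + (1)*b*d*f^2*c 1%nat 1%nat + (2)*b*g*e*f*c 1%nat 1%nat + (1)*a*g^2*f*c 1%nat 2%nat + (2)*b*d*g*f*c 1%nat 2%nat + (1)*b*g^2*e*c 1%nat 2%nat + (1)*a*g^3*c 1%nat 3%nat + (3)*b*d*g^2*c 1%nat 3%nat + (2)*a*b*f^2*c 2%nat 0%nat + (2)*b^2*e*f*c 2%nat 0%nat + (2)*a*b*g*f*c 2%nat 1%nat + (1)*b^2*d*f*c 2%nat 1%nat + (1)*b^2*g*e*c 2%nat 1%nat + (2)*a*b*g^2*c 2%nat 2%nat + (2)*b^2*d*g*c 2%nat 2%nat + (3)*a*b^2*f*c 3%nat 0%nat + (1)*b^3*e*c 3%nat 0%nat + (3)*a*b^2*g*c 3%nat 1%nat + (1)*b^3*d*c 3%nat 1%nat + (4)*a*b^3*c 4%nat 0%nat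
  | 2%nat, 0%nat => (1)*l^2*e^2*c 0%nat 2%nat + (3)*l^2*d*e*c 0%nat 3%nat + (6)*l^2*d^2*c 0%nat 4%nat + (1)*l^2*a*e*c 1%nat 2%nat + (3)*l^2*a*d*c 1%nat 3%nat + (1)*l^2*a^2*c 2%nat 2%nat
  | 2%nat, 1%nat => (3)*l*e^2*f*c 0%nat 1%nat + (4)*l*d*e*f*c 0%nat 2%nat + (2)*l*g*e^2*c 0%nat 2%nat + (3)*l*d^2*f*c 0%nat 3%nat + (6)*l*d*g*e*c 0%nat 3%nat + (12)*l*d^2*g*c 0%nat 4%nat + (2)*l*a*e*f*c 1%nat 1%nat + (1)*l*b*e^2*c 1%nat 1%nat + (2)*l*a*d*f*c 1%nat 2%nat + (2)*l*a*g*e*c 1%nat 2%nat + (2)*l*b*d*e*c 1%nat 2%nat + (6)*l*a*d*g*c 1%nat 3%nat + (3)*l*b*d^2*c 1%nat 3%nat + (1)*l*a^2*f*c 2%nat 1%nat + (2)*l*a*b*e*c 2%nat 1%nat + (2)*l*a^2*g*c 2%nat 2%nat + (4)*l*a*b*d*c 2%nat 2%nat + (3)*l*a^2*b*c 3%nat 1%nat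
  | 2%nat, 2%nat => (6)*e^2*f^2*c 0%nat 0%nat + (3)*d*e*f^2*c 0%nat 1%nat + (3)*g*e^2*f*c 0%nat 1%nat + (1)*d^2*f^2*c 0%nat 2%nat + (4)*d*g*e*f*c 0%nat 2%nat + (1)*g^2*e^2*c 0%nat 2%nat + (3)*d^2*g*f*c 0%nat 3%nat + (3)*d*g^2*e*c 0%nat 3%nat + (6)*d^2*g^2*c 0%nat 4%nat + (3)*a*e*f^2*c 1%nat 0%nat + (3)*b*e^2*f*c 1%nat 0%nat + (1)*a*d*f^2*c 1%nat 1%nat + (2)*a*g*e*f*c 1%nat 1%nat + (2)*b*d*e*f*c 1%nat 1%nat + (1)*b*g*e^2*c 1%nat 1%nat + (2)*a*d*g*f*c 1%nat 2%nat + (1)*a*g^2*e*c 1%nat 2%nat + (1)*b*d^2*f*c 1%nat 2%nat + (2)*b*d*g*e*c 1%nat 2%nat + (3)*a*d*g^2*c 1%nat 3%nat + (3)*b*d^2*g*c 1%nat 3%nat + (1)*a^2*f^2*c 2%nat 0%nat + (4)*a*b*e*f*c 2%nat 0%nat + (1)*b^2*e^2*c 2%nat 0%nat + (1)*a^2*g*f*c 2%nat 1%nat + (2)*a*b*d*f*c 2%nat 1%nat + (2)*a*b*g*e*c 2%nat 1%nat + (1)*b^2*d*e*c 2%nat 1%nat + (1)*a^2*g^2*c 2%nat 2%nat + (4)*a*b*d*g*c 2%nat 2%nat + (1)*b^2*d^2*c 2%nat 2%nat + (3)*a^2*b*f*c 3%nat 0%nat + (3)*a*b^2*e*c 3%nat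 0%nat + (3)*a^2*b*g*c 3%nat 1%nat + (3)*a*b^2*d*c 3%nat 1%nat + (6)*a^2*b^2*c 4%nat 0%nat
  | 3%nat, 0%nat => (1)*l*e^3*c 0%nat 1%nat + (2)*l*d*e^2*c 0%nat 2%nat + (3)*l*d^2*e*c 0%nat 3%nat + (4)*l*d^3*c 0%nat 4%nat + (1)*l*a*e^2*c 1%nat 1%nat + (2)*l*a*d*e*c 1%nat 2%nat + (3)*l*a*d^2*c 1%nat 3%nat + (1)*l*a^2*e*c 2%nat 1%nat + (2)*l*a^2*d*c 2%nat 2%nat + (1)*l*a^3*c 3%nat 1%nat
  | 3%nat, 1%nat => (4)*e^3*f*c 0%nat 0%nat + (3)*d*e^2*f*c 0%nat 1%nat + (1)*g*e^3*c 0%nat 1%nat + (2)*d^2*e*f*c 0%nat 2%nat + (2)*d*g*e^2*c 0%nat 2%nat + (1)*d^3*f*c 0%nat 3%nat + (3)*d^2*g*e*c 0%nat 3%nat + (4)*d^3*g*c 0%nat 4%nat + (3)*a*e^2*f*c 1%nat 0%nat + (1)*b*e^3*c 1%nat 0%nat + (2)*a*d*e*f*c 1%nat 1%nat + (1)*a*g*e^2*c 1%nat 1%nat + (1)*b*d*e^2*c 1%nat 1%nat + (1)*a*d^2*f*c 1%nat 2%nat + (2)*a*d*g*e*c 1%nat 2%nat + (1)*b*d^2*e*c 1%nat 2%nat + (3)*a*d^2*g*c 1%nat 3%nat + (1)*b*d^3*c 1%nat 3%nat + (2)*a^2*e*f*c 2%nat 0%nat + (2)*a*b*e^2*c 2%nat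 0%nat + (1)*a^2*d*f*c 2%nat 1%nat + (1)*a^2*g*e*c 2%nat 1%nat + (2)*a*b*d*e*c 2%nat 1%nat + (2)*a^2*d*g*c 2%nat 2%nat + (2)*a*b*d^2*c 2%nat 2%nat + (1)*a^3*f*c 3%nat 0%nat + (3)*a^2*b*e*c 3%nat 0%nat + (1)*a^3*g*c 3%nat 1%nat + (3)*a^2*b*d*c 3%nat 1%nat + (4)*a^3*b*c 4%nat 0%nat
  | 4%nat, 0%nat => (1)*e^4*c 0%nat 0%nat + (1)*d*e^3*c 0%nat 1%nat + (1)*d^2*e^2*c 0%nat 2%nat + (1)*d^3*e*c 0%nat 3%nat + (1)*d^4*c 0%nat 4%nat + (1)*a*e^3*c 1%nat 0%nat + (1)*a*d*e^2*c 1%nat 1%nat + (1)*a*d^2*e*c 1%nat 2%nat + (1)*a*d^3*c 1%nat 3%nat + (1)*a^2*e^2*c 2%nat 0%nat + (1)*a^2*d*e*c 2%nat 1%nat + (1)*a^2*d^2*c 2%nat 2%nat + (1)*a^3*e*c 3%nat 0%nat + (1)*a^3*d*c 3%nat 1%nat + (1)*a^4*c 4%nat 0%nat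
  | _, _ => 0 end.

Definition BE3 (l a b d g e f : R) (c : nat -> nat -> R) (i j : nat) : R :=
  match i, j with
  | 0%nat, 0%nat => (1)*l^4*c 0%nat 0%nat
  | 0%nat, 1%nat => (4)*l^3*f*c 0%nat 0%nat + (1)*l^3*g*c 0%nat 1%nat + (1)*l^3*b*c 1%nat 0%nat
  | 0%nat, 2%nat => (6)*l^2*f^2*c 0%nat 0%nat + (3)*l^2*g*f*c 0%nat 1%nat + (1)*l^2*g^2*c 0%nat 2%nat + (3)*l^2*b*f*c 1%nat 0%nat + (1)*l^2*b*g*c 1%nat 1%nat + (1)*l^2*b^2*c 2%nat 0%nat
  | 0%nat, 3%nat => (4)*l*f^3*c 0%nat 0%nat + (3)*l*g*f^2*c 0%nat 1%nat + (2)*l*g^2*f*c 0%nat 2%nat + (1)*l*g^3*c 0%nat 3%nat + (3)*l*b*f^2*c 1%nat 0%nat + (2)*l*b*g*f*c 1%nat 1%nat + (1)*l*b*g^2*c 1%nat 2%nat + (2)*l*b^2*f*c 2%nat 0%nat + (1)*l*b^2*g*c 2%nat 1%nat + (1)*l*b^3*c 3%nat 0%nat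
  | 0%nat, 4%nat => (1)*f^4*c 0%nat 0%nat + (1)*g*f^3*c 0%nat 1%nat + (1)*g^2*f^2*c 0%nat 2%nat + (1)*g^3*f*c 0%nat 3%nat + (1)*g^4*c 0%nat 4%nat + (1)*b*f^3*c 1%nat 0%nat + (1)*b*g*f^2*c 1%nat 1%nat + (1)*b*g^2*f*c 1%nat 2%nat + (1)*b*g^3*c 1%nat 3%nat + (1)*b^2*f^2*c 2%nat 0%nat + (1)*b^2*g*f*c 2%nat 1%nat + (1)*b^2*g^2*c 2%nat 2%nat + (1)*b^3*f*c 3%nat 0%nat + (1)*b^3*g*c 3%nat 1%nat + (1)*b^4*c 4%nat 0%nat
  | 1%nat, 0%nat => (4)*l^3*e*c 0%nat 0%nat + (1)*l^3*d*c 0%nat 1%nat + (1)*l^3*a*c 1%nat 0%nat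
  | 1%nat, 1%nat => (12)*l^2*e*f*c 0%nat 0%nat + (3)*l^2*d*f*c 0%nat 1%nat + (3)*l^2*g*e*c 0%nat 1%nat + (2)*l^2*d*g*c 0%nat 2%nat + (3)*l^2*a*f*c 1%nat 0%nat + (3)*l^2*b*e*c 1%nat 0%nat + (1)*l^2*a*g*c 1%nat 1%nat + (1)*l^2*b*d*c 1%nat 1%nat + (2)*l^2*a*b*c 2%nat 0%nat
  | 1%nat, 2%nat => (12)*l*e*f^2*c 0%nat 0%nat + (3)*l*d*f^2*c 0%nat 1%nat + (6)*l*g*e*f*c 0%nat 1%nat + (4)*l*d*g*f*c 0%nat 2%nat + (2)*l*g^2*e*c 0%nat 2%nat + (3)*l*d*g^2*c 0%nat 3%nat + (3)*l*a*f^2*c 1%nat 0%nat + (6)*l*b*e*f*c 1%nat 0%nat + (2)*l*a*g*f*c 1%nat 1%nat + (2)*l*b*d*f*c 1%nat 1%nat + (2)*l*b*g*e*c 1%nat 1%nat + (1)*l*a*g^2*c 1%nat 2%nat + (2)*l*b*d*g*c 1%nat 2%nat + (4)*l*a*b*f*c 2%nat 0%nat + (2)*l*b^2*e*c 2%nat 0%nat + (2)*l*a*b*g*c 2%nat 1%nat + (1)*l*b^2*d*c 2%nat 1%nat + (3)*l*a*b^2*c 3%nat 0%nat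
  | 1%nat, 3%nat => (4)*e*f^3*c 0%nat 0%nat + (1)*d*f^3*c 0%nat 1%nat + (3)*g*e*f^2*c 0%nat 1%nat + (2)*d*g*f^2*c 0%nat 2%nat + (2)*g^2*e*f*c 0%nat 2%nat + (3)*d*g^2*f*c 0%nat 3%nat + (1)*g^3*e*c 0%nat 3%nat + (4)*d*g^3*c 0%nat 4%nat + (1)*a*f^3*c 1%nat 0%nat + (3)*b*e*f^2*c 1%nat 0%nat + (1)*a*g*f^2*c 1%nat 1%nat + (1)*b*d*f^2*c 1%nat 1%nat + (2)*b*g*e*f*c 1%nat 1%nat + (1)*a*g^2*f*c 1%nat 2%nat + (2)*b*d*g*f*c 1%nat 2%nat + (1)*b*g^2*e*c 1%nat 2%nat + (1)*a*g^3*c 1%nat 3%nat + (3)*b*d*g^2*c 1%nat 3%nat + (2)*a*b*f^2*c 2%nat 0%nat + (2)*b^2*e*f*c 2%nat 0%nat + (2)*a*b*g*f*c 2%nat 1%nat + (1)*b^2*d*f*c 2%nat 1%nat + (1)*b^2*g*e*c 2%nat 1%nat + (2)*a*b*g^2*c 2%nat 2%nat + (2)*b^2*d*g*c 2%nat 2%nat + (3)*a*b^2*f*c 3%nat 0%nat + (1)*b^3*e*c 3%nat 0%nat + (3)*a*b^2*g*c 3%nat 1%nat + (1)*b^3*d*c 3%nat 1%nat + (4)*a*b^3*c 4%nat 0%nat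
  | 2%nat, 0%nat => (6)*l^2*e^2*c 0%nat 0%nat + (3)*l^2*d*e*c 0%nat 1%nat + (1)*l^2*d^2*c 0%nat 2%nat + (3)*l^2*a*e*c 1%nat 0%nat + (1)*l^2*a*d*c 1%nat 1%nat + (1)*l^2*a^2*c 2%nat 0%nat
  | 2%nat, 1%nat => (12)*l*e^2*f*c 0%nat 0%nat + (6)*l*d*e*f*c 0%nat 1%nat + (3)*l*g*e^2*c 0%nat 1%nat + (2)*l*d^2*f*c 0%nat 2%nat + (4)*l*d*g*e*c 0%nat 2%nat + (3)*l*d^2*g*c 0%nat 3%nat + (6)*l*a*e*f*c 1%nat 0%nat + (3)*l*b*e^2*c 1%nat 0%nat + (2)*l*a*d*f*c 1%nat 1%nat + (2)*l*a*g*e*c 1%nat 1%nat + (2)*l*b*d*e*c 1%nat 1%nat + (2)*l*a*d*g*c 1%nat 2%nat + (1)*l*b*d^2*c 1%nat 2%nat + (2)*l*a^2*f*c 2%nat 0%nat + (4)*l*a*b*e*c 2%nat 0%nat + (1)*l*a^2*g*c 2%nat 1%nat + (2)*l*a*b*d*c 2%nat 1%nat + (3)*l*a^2*b*c 3%nat 0%nat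
  | 2%nat, 2%nat => (6)*e^2*f^2*c 0%nat 0%nat + (3)*d*e*f^2*c 0%nat 1%nat + (3)*g*e^2*f*c 0%nat 1%nat + (1)*d^2*f^2*c 0%nat 2%nat + (4)*d*g*e*f*c 0%nat 2%nat + (1)*g^2*e^2*c 0%nat 2%nat + (3)*d^2*g*f*c 0%nat 3%nat + (3)*d*g^2*e*c 0%nat 3%nat + (6)*d^2*g^2*c 0%nat 4%nat + (3)*a*e*f^2*c 1%nat 0%nat + (3)*b*e^2*f*c 1%nat 0%nat + (1)*a*d*f^2*c 1%nat 1%nat + (2)*a*g*e*f*c 1%nat 1%nat + (2)*b*d*e*f*c 1%nat 1%nat + (1)*b*g*e^2*c 1%nat 1%nat + (2)*a*d*g*f*c 1%nat 2%nat + (1)*a*g^2*e*c 1%nat 2%nat + (1)*b*d^2*f*c 1%nat 2%nat + (2)*b*d*g*e*c 1%nat 2%nat + (3)*a*d*g^2*c 1%nat 3%nat + (3)*b*d^2*g*c 1%nat 3%nat + (1)*a^2*f^2*c 2%nat 0%nat + (4)*a*b*e*f*c 2%nat 0%nat + (1)*b^2*e^2*c 2%nat 0%nat + (1)*a^2*g*f*c 2%nat 1%nat + (2)*a*b*d*f*c 2%nat 1%nat + (2)*a*b*g*e*c 2%nat 1%nat + (1)*b^2*d*e*c 2%nat 1%nat + (1)*a^2*g^2*c 2%nat 2%nat + (4)*a*b*d*g*c 2%nat 2%nat + (1)*b^2*d^2*c 2%nat 2%nat + (3)*a^2*b*f*c 3%nat 0%nat + (3)*a*b^2*e*c 3%nat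 0%nat + (3)*a^2*b*g*c 3%nat 1%nat + (3)*a*b^2*d*c 3%nat 1%nat + (6)*a^2*b^2*c 4%nat 0%nat
  | 3%nat, 0%nat => (4)*l*e^3*c 0%nat 0%nat + (3)*l*d*e^2*c 0%nat 1%nat + (2)*l*d^2*e*c 0%nat 2%nat + (1)*l*d^3*c 0%nat 3%nat + (3)*l*a*e^2*c 1%nat 0%nat + (2)*l*a*d*e*c 1%nat 1%nat + (1)*l*a*d^2*c 1%nat 2%nat + (2)*l*a^2*e*c 2%nat 0%nat + (1)*l*a^2*d*c 2%nat 1%nat + (1)*l*a^3*c 3%nat 0%nat
  | 3%nat, 1%nat => (4)*e^3*f*c 0%nat 0%nat + (3)*d*e^2*f*c 0%nat 1%nat + (1)*g*e^3*c 0%nat 1%nat + (2)*d^2*e*f*c 0%nat 2%nat + (2)*d*g*e^2*c 0%nat 2%nat + (1)*d^3*f*c 0%nat 3%nat + (3)*d^2*g*e*c 0%nat 3%nat + (4)*d^3*g*c 0%nat 4%nat + (3)*a*e^2*f*c 1%nat 0%nat + (1)*b*e^3*c 1%nat 0%nat + (2)*a*d*e*f*c 1%nat 1%nat + (1)*a*g*e^2*c 1%nat 1%nat + (1)*b*d*e^2*c 1%nat 1%nat + (1)*a*d^2*f*c 1%nat 2%nat + (2)*a*d*g*e*c 1%nat 2%nat + (1)*b*d^2*e*c 1%nat 2%nat + (3)*a*d^2*g*c 1%nat 3%nat + (1)*b*d^3*c 1%nat 3%nat + (2)*a^2*e*f*c 2%nat 0%nat + (2)*a*b*e^2*c 2%nat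 0%nat + (1)*a^2*d*f*c 2%nat 1%nat + (1)*a^2*g*e*c 2%nat 1%nat + (2)*a*b*d*e*c 2%nat 1%nat + (2)*a^2*d*g*c 2%nat 2%nat + (2)*a*b*d^2*c 2%nat 2%nat + (1)*a^3*f*c 3%nat 0%nat + (3)*a^2*b*e*c 3%nat 0%nat + (1)*a^3*g*c 3%nat 1%nat + (3)*a^2*b*d*c 3%nat 1%nat + (4)*a^3*b*c 4%nat 0%nat
  | 4%nat, 0%nat => (1)*e^4*c 0%nat 0%nat + (1)*d*e^3*c 0%nat 1%nat + (1)*d^2*e^2*c 0%nat 2%nat + (1)*d^3*e*c 0%nat 3%nat + (1)*d^4*c 0%nat 4%nat + (1)*a*e^3*c 1%nat 0%nat + (1)*a*d*e^2*c 1%nat 1%nat + (1)*a*d^2*e*c 1%nat 2%nat + (1)*a*d^3*c 1%nat 3%nat + (1)*a^2*e^2*c 2%nat 0%nat + (1)*a^2*d*e*c 2%nat 1%nat + (1)*a^2*d^2*c 2%nat 2%nat + (1)*a^3*e*c 3%nat 0%nat + (1)*a^3*d*c 3%nat 1%nat + (1)*a^4*c 4%nat 0%nat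
  | _, _ => 0 end.

Lemma compE1 l a b d g e f c x y :
  quartic c (l + a*x + b*y, d*x + g*y, e*x + f*y) = affine_poly (BE1 l a b d g e f c) x y.
Proof. unfold quartic, affine_poly, px, py, pz, BE1; simpl. ring. Qed.
Lemma compE2 l a b d g e f c x y :
  quartic c (a*x + b*y, l + d*x + g*y, e*x + f*y) = affine_poly (BE2 l a b d g e f c) x y.
Proof. unfold quartic, affine_poly, px, py, pz, BE2; simpl. ring. Qed.
Lemma compE3 l a b d g e f c x y :
  quartic c (a*x + b*y, d*x + g*y, l + e*x + f*y) = affine_poly (BE3 l a b d g e f c) x y.
Proof. unfold quartic, affine_poly, px, py, pz, BE3; simpl. ring. Qed.
Lemma poly1_zero a0 a1 a2 a3 a4 :
  (forall x, a0 + a1*x + a2*x^2 + a3*x^3 + a4*x^4 = 0) ->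
  a0 = 0 /\ a1 = 0 /\ a2 = 0 /\ a3 = 0 /\ a4 = 0.
Proof.
  intros H. pose proof (H 0) as H0. pose proof (H 1) as H1. pose proof (H (-1)) as H2.
  pose proof (H 2) as H3. pose proof (H (-2)) as H4. simpl in *. lra.
Qed.

Lemma aff_zero b : (forall x y, affine_poly b x y = 0) ->
  b 0%nat 0%nat = 0 /\ b 1%nat 0%nat = 0 /\ b 0%nat 1%nat = 0 /\
  b 2%nat 0%nat = 0 /\ b 1%nat 1%nat = 0 /\ b 3%nat 0%nat = 0.
Proof.
  intros H.
  assert (Hy : forall y,
    b 0%nat 0%nat + b 0%nat 1%nat * y + b 0%nat 2%nat * y^2 + b 0%nat 3%nat * y^3 + b 0%nat 4%nat * y^4 = 0 /\
    b 1%nat 0%nat + b 1%nat 1%nat * y + b 1%nat 2%nat * y^2 + b 1%nat 3%nat * y^3 + 0 * y^4 = 0 /\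
    b 2%nat 0%nat + b 2%nat 1%nat * y + b 2%nat 2%nat * y^2 + 0 * y^3 + 0 * y^4 = 0 /\
    b 3%nat 0%nat + b 3%nat 1%nat * y + 0 * y^2 + 0 * y^3 + 0 * y^4 = 0 /\
    b 4%nat 0%nat + 0 * y + 0 * y^2 + 0 * y^3 + 0 * y^4 = 0).
  { intro y. apply poly1_zero. intro x. transitivity (affine_poly b x y); [unfold affine_poly; simpl; ring | apply H]. }
  destruct (poly1_zero _ _ _ _ _ (fun y => proj1 (Hy y))) as [A0 [A1 _]].
  destruct (poly1_zero _ _ _ _ _ (fun y => proj1 (proj2 (Hy y)))) as [B0 [B1 _]].
  destruct (poly1_zero _ _ _ _ _ (fun y => proj1 (proj2 (proj2 (Hy y))))) as [C0 _].
  destruct (poly1_zero _ _ _ _ _ (fun y => proj1 (proj2 (proj2 (proj2 (Hy y)))))) as [D0 _].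
  repeat split; assumption.
Qed.

Lemma aff_sub b b' x y : affine_poly (fun i j => b i j - b' i j) x y = affine_poly b x y - affine_poly b' x y.
Proof. unfold affine_poly; simpl; ring. Qed.

Lemma aff_eq b b' : (forall x y, affine_poly b x y = affine_poly b' x y) ->
  b 0%nat 0%nat = b' 0%nat 0%nat /\ b 1%nat 0%nat = b' 1%nat 0%nat /\ b 0%nat 1%nat = b' 0%nat 1%nat /\
  b 2%nat 0%nat = b' 2%nat 0%nat /\ b 1%nat 1%nat = b' 1%nat 1%nat /\ b 3%nat 0%nat = b' 3%nat 0%nat.
Proof.
  intros H.
  destruct (aff_zero (fun i j => b i j - b' i j)) as [A [B [C [D [E F]]]]].
  { intros x y. rewrite aff_sub, H. ring. }
  repeat split; lra.
Qed.

Lemma quartic_lin a c1 c2 p :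
  quartic (fun i j => a * c1 i j + c2 i j) p = a * quartic c1 p + quartic c2 p.
Proof. unfold quartic; simpl; ring. Qed.

Lemma quartic_zero p : quartic (fun _ _ => 0) p = 0.
Proof. unfold quartic; simpl; ring. Qed.

Lemma tilde00 b : tilde_poly b 0 0 = b 2%nat 0%nat.
Proof. unfold tilde_poly; simpl; ring. Qed.

Lemma Gbase a K : 0 <= K -> (forall t, 0 < t <= 1 -> 0 <= a + K*t) -> 0 <= a.
Proof.
  intros HK H. destruct (Rle_lt_dec 0 a) as [h|h]; auto. exfalso.
  set (D := K - a). assert (HD : 0 < D) by (unfold D; lra).
  set (t := -a / (2*D)).
  assert (Ht : t * (2*D) = -a) by (unfold t; field; lra).
  assert (Htp : 0 < t) by (unfold t; apply Rdiv_lt_0_compat; lra).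
  assert (Ht1 : t <= 1) by (apply (Rmult_le_reg_r (2*D)); [lra|]; rewrite Ht; unfold D; lra).
  specialize (H t (conj Htp Ht1)).
  assert (0 <= (a + K*t) * (2*D)) by (apply Rmult_le_pos; lra).
  assert ((a + K*t)*(2*D) = a*(K - 2*a)) by (replace ((a + K*t)*(2*D)) with (a*(2*D) + K*(t*(2*D))) by ring; rewrite Ht; unfold D; ring).
  nra.
Qed.

Lemma Gpoly a b c d : (forall t, 0 < t <= 1 -> 0 <= a + b*t + c*t^2 + d*t^3) -> 0 <= a.
Proof.
  intros H. apply (Gbase a (Rabs b + Rabs c + Rabs d)).
  { pose proof (Rabs_pos b); pose proof (Rabs_pos c); pose proof (Rabs_pos d); lra. }
  intros t Ht. specialize (H t Ht).
  assert (b*t <= Rabs b * t) by (apply Rmult_le_compat_r; [lra| apply Rle_abs]).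
  assert (c*t^2 <= Rabs c * t).
  { assert (c*t^2 <= Rabs c * t^2) by (apply Rmult_le_compat_r; [apply pow2_ge_0| apply Rle_abs]).
    assert (Rabs c * t^2 <= Rabs c * t) by (apply Rmult_le_compat_l; [apply Rabs_pos| simpl; nra]).
    lra. }
  assert (d*t^3 <= Rabs d * t).
  { assert (0 <= t^3) by (simpl; apply Rmult_le_pos; [lra| apply Rmult_le_pos; lra]).
    assert (d*t^3 <= Rabs d * t^3) by (apply Rmult_le_compat_r; [lra| apply Rle_abs]).
    assert (t^3 <= t) by (simpl; nra).
    assert (Rabs d * t^3 <= Rabs d * t) by (apply Rmult_le_compat_l; [apply Rabs_pos| lra]).
    lra. }
  lra.
Qed.

Lemma pos_div p E : 0 < p -> 0 <= p * E -> 0 <= E.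
Proof. intros. destruct (Rle_lt_dec 0 E); auto. nra. Qed.

Lemma L1 a1 a2 a3 a4 : (forall t, 0 <= a1*t + a2*t^2 + a3*t^3 + a4*t^4) -> a1 = 0.
Proof.
  intros H.
  assert (0 <= a1).
  { apply (Gpoly a1 a2 a3 a4). intros t Ht. apply (pos_div t); [lra|].
    specialize (H t). replace (t * (a1 + a2*t + a3*t^2 + a4*t^3)) with (a1*t + a2*t^2 + a3*t^3 + a4*t^4) by ring. exact H. }
  assert (0 <= -a1).
  { apply (Gpoly (-a1) a2 (-a3) a4). intros t Ht. apply (pos_div t); [lra|].
    specialize (H (-t)). replace (t * (-a1 + a2*t + (-a3)*t^2 + a4*t^3)) with (a1*(-t) + a2*(-t)^2 + a3*(-t)^3 + a4*(-t)^4) by ring. exact H. }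
  lra.
Qed.

Lemma L2 a2 a3 a4 : (forall t, 0 <= a2*t^2 + a3*t^3 + a4*t^4) -> 0 <= a2.
Proof.
  intros H. apply (Gpoly a2 a3 a4 0). intros t Ht. apply (pos_div (t^2)); [apply pow_lt; lra|].
  specialize (H t). replace (t^2 * (a2 + a3*t + a4*t^2 + 0*t^3)) with (a2*t^2 + a3*t^3 + a4*t^4) by ring. exact H.
Qed.

Lemma L3 a3 a4 : (forall t, 0 <= a3*t^3 + a4*t^4) -> a3 = 0.
Proof.
  intros H.
  assert (0 <= a3).
  { apply (Gpoly a3 a4 0 0). intros t Ht. apply (pos_div (t^3)); [apply pow_lt; lra|].
    specialize (H t). replace (t^3 * (a3 + a4*t + 0*t^2 + 0*t^3)) with (a3*t^3 + a4*t^4) by ring. exact H. }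
  assert (0 <= -a3).
  { apply (Gpoly (-a3) a4 0 0). intros t Ht. apply (pos_div (t^3)); [apply pow_lt; lra|].
    specialize (H (-t)). replace (t^3 * (-a3 + a4*t + 0*t^2 + 0*t^3)) with (a3*(-t)^3 + a4*(-t)^4) by ring. exact H. }
  lra.
Qed.

Definition low6 (b : nat -> nat -> R) : Prop :=
  b 0%nat 0%nat = 0 /\ b 1%nat 0%nat = 0 /\ b 0%nat 1%nat = 0 /\
  b 2%nat 0%nat = 0 /\ b 1%nat 1%nat = 0 /\ b 3%nat 0%nat = 0.

Lemma aff_nonneg b : (forall x y, 0 <= affine_poly b x y) ->
  b 0%nat 0%nat = 0 -> b 1%nat 0%nat = 0 -> b 0%nat 1%nat = 0 -> b 2%nat 0%nat = 0 -> low6 b.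
Proof.
  intros H H00 H10 H01 H20.
  assert (H11 : b 1%nat 1%nat = 0).
  { apply (L1 _ (b 0%nat 2%nat) 0 0). intro k.
    apply (L2 _ (b 3%nat 0%nat + b 2%nat 1%nat * k + b 1%nat 2%nat * k^2 + b 0%nat 3%nat * k^3)
               (b 4%nat 0%nat + b 3%nat 1%nat * k + b 2%nat 2%nat * k^2 + b 1%nat 3%nat * k^3 + b 0%nat 4%nat * k^4)).
    intro t. specialize (H t (k*t)). unfold affine_poly in H. simpl in H.
    rewrite H00, H10, H01, H20 in H.
    match goal with |- 0 <= ?E => replace E with (b 0%nat 0%nat * 0 + (0 * 0 * t) + 0 * (k*t) + 0 * (t*t) + 
      b 1%nat 1%nat * t * (k * t) + b 0%nat 2%nat * (k*t) * (k*t) + 0 * 0 * 0 * 0 * t * t * t + 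
      b 3%nat 0%nat * t^3 + b 2%nat 1%nat * t^2 * (k*t) + b 1%nat 2%nat * t * (k*t)^2 + b 0%nat 3%nat * (k*t)^3 +
      b 4%nat 0%nat * t^4 + b 3%nat 1%nat * t^3 * (k*t) + b 2%nat 2%nat * t^2 * (k*t)^2 + b 1%nat 3%nat * t * (k*t)^3 + b 0%nat 4%nat * (k*t)^4) by (rewrite H00; ring) end.
    lra. }
  split; [|split; [|split; [|split; [|split]]]]; auto.
  apply (L3 _ (b 4%nat 0%nat)). intro t. specialize (H t 0). unfold affine_poly in H. simpl in H.
  rewrite H00, H10, H20 in H. lra.
Qed.
Definition CL1 (c : nat -> nat -> R) : Prop :=
  c 4%nat 0%nat = 0 /\ c 3%nat 1%nat = 0 /\ c 3%nat 0%nat = 0 /\ c 2%nat 0%nat = 0 /\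
  c 2%nat 1%nat = 0 /\ c 1%nat 0%nat = 0.
Definition CL2 (c : nat -> nat -> R) : Prop :=
  c 0%nat 4%nat = 0 /\ c 0%nat 3%nat = 0 /\ c 1%nat 3%nat = 0 /\ c 0%nat 2%nat = 0 /\
  c 1%nat 2%nat = 0 /\ c 0%nat 1%nat = 0.
Definition CL3 (c : nat -> nat -> R) : Prop :=
  c 4%nat 0%nat = 0 /\ c 3%nat 1%nat = 0 /\ c 3%nat 0%nat = 0 /\
  c 2%nat 2%nat + c 2%nat 1%nat + c 2%nat 0%nat = 0 /\ c 2%nat 1%nat + 2 * c 2%nat 0%nat = 0 /\
  c 1%nat 3%nat + c 1%nat 2%nat + c 1%nat 1%nat + c 1%nat 0%nat = 0.
Definition CP2 (c : nat -> nat -> R) : Prop :=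
  c 0%nat 4%nat = 0 /\ c 1%nat 3%nat = 0 /\ c 0%nat 3%nat = 0.
Definition CP3 (c : nat -> nat -> R) : Prop :=
  c 0%nat 0%nat = 0 /\ c 1%nat 0%nat = 0 /\ c 0%nat 1%nat = 0.

Lemma nz_mul a x : a <> 0 -> a * x = 0 -> x = 0.
Proof. intros Ha H. destruct (Rmult_integral _ _ H); [contradiction|auto]. Qed.

Lemma nz_l a b : a * b <> 0 -> a <> 0.
Proof. intros H Z. apply H. rewrite Z. ring. Qed.
Lemma nz_r a b : a * b <> 0 -> b <> 0.
Proof. intros H Z. apply H. rewrite Z. ring. Qed.

Ltac nzt := repeat (apply Rmult_integral_contrapositive_currified || apply pow_nonzero); auto.

Ltac rwK E := repeat (match goal with H : _ |- _ => progress (rewrite E in H) end).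

Ltac pair_eq := apply f_equal2; [apply f_equal2; ring | ring].

Lemma inv_e1y0 g c m b : (forall p, g p = quartic c p) -> centered_at_line m e1 (join e1 e3) ->
  local_coeffs g m b -> low6 b -> CL1 c.
Proof.
  intros Hg [[Hdet [lam [Hlam Hm3]]] Hl] Hloc [H00 [H10 [H01 [H20 [H11 H30]]]]].
  unfold mapply, smul, e1, e3, px, py, pz in Hm3; simpl in Hm3. injection Hm3; intros E2 E1 E0.
  unfold on_line, join, cross, dot, mapply, e1, e3, px, py, pz in Hl; simpl in Hl.
  assert (M02 : m 0%nat 2%nat = lam) by lra.
  assert (M12 : m 1%nat 2%nat = 0) by lra.
  assert (M22 : m 2%nat 2%nat = 0) by lra.
  assert (M10 : m 1%nat 0%nat = 0) by lra.
  assert (Hc : forall x y, affine_poly b x y = affine_poly (BE1 lam (m 0%nat 0%nat) (m 0%nat 1%nat) (m 1%nat 0%nat) (m 1%nat 1%nat) (m 2%nat 0%nat) (m 2%nat 1%nat) c) x y).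
  { intros x y. rewrite <- Hloc, Hg, <- compE1. f_equal. unfold mapply, px, py, pz; simpl.
    rewrite M02, M12, M22. pair_eq. }
  destruct (aff_eq _ _ Hc) as [K00 [K10 [K01 [K20 [K11 K30]]]]].
  unfold BE1 in K00, K10, K01, K20, K11, K30. simpl in K00, K10, K01, K20, K11, K30.
  assert (NZ : lam * m 1%nat 1%nat * m 2%nat 0%nat <> 0).
  { intro Z. apply Hdet. unfold det3. rewrite M02, M12, M22, M10. lra. }
  pose proof (nz_r _ _ NZ) as N20. pose proof (nz_r _ _ (nz_l _ _ NZ)) as N11.
  rwK M10.
  assert (C40 : c 4%nat 0%nat = 0).
  { apply (nz_mul (lam^4)); [nzt|]. rewrite H00 in K00. lra. }
  assert (C30 : c 3%nat 0%nat = 0).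
  { apply (nz_mul (lam^3 * m 2%nat 0%nat)); [nzt|]. rewrite H10, C40 in K10. lra. }
  assert (C31 : c 3%nat 1%nat = 0).
  { apply (nz_mul (lam^3 * m 1%nat 1%nat)); [nzt|]. rewrite H01, C40, C30 in K01. lra. }
  assert (C20 : c 2%nat 0%nat = 0).
  { apply (nz_mul (lam^2 * m 2%nat 0%nat ^2)); [nzt|]. rewrite H20, ?C40, ?C30, ?C31 in K20. lra. }
  assert (C21 : c 2%nat 1%nat = 0).
  { apply (nz_mul (lam^2 * m 1%nat 1%nat * m 2%nat 0%nat)); [nzt|]. rewrite H11, ?C40, ?C30, ?C31, ?C20 in K11. lra. }
  assert (C10 : c 1%nat 0%nat = 0).
  { apply (nz_mul (lam * m 2%nat 0%nat ^3)); [nzt|]. rewrite H30, ?C40, ?C30, ?C31, ?C20, ?C21 in K30. lra. }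
  repeat split; assumption.
Qed.

Lemma inv_e1yz g c m b : (forall p, g p = quartic c p) -> centered_at_line m e1 (join e1 e4) ->
  local_coeffs g m b -> low6 b -> CL3 c.
Proof.
  intros Hg [[Hdet [lam [Hlam Hm3]]] Hl] Hloc [H00 [H10 [H01 [H20 [H11 H30]]]]].
  unfold mapply, smul, e1, e3, px, py, pz in Hm3; simpl in Hm3. injection Hm3; intros E2 E1 E0.
  unfold on_line, join, cross, dot, mapply, e1, e4, px, py, pz in Hl; simpl in Hl.
  assert (M02 : m 0%nat 2%nat = lam) by lra.
  assert (M12 : m 1%nat 2%nat = 0) by lra.
  assert (M22 : m 2%nat 2%nat = 0) by lra.
  assert (M20 : m 2%nat 0%nat = m 1%nat 0%nat) by lra.
  assert (Hc : forall x y, affine_poly b x y = affine_poly (BE1 lam (m 0%nat 0%nat) (m 0%nat 1%nat) (m 1%nat 0%nat) (m 1%nat 1%nat) (m 2%nat 0%nat) (m 2%nat 1%nat) c) x y).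
  { intros x y. rewrite <- Hloc, Hg, <- compE1. f_equal. unfold mapply, px, py, pz; simpl.
    rewrite M02, M12, M22. pair_eq. }
  destruct (aff_eq _ _ Hc) as [K00 [K10 [K01 [K20 [K11 K30]]]]].
  unfold BE1 in K00, K10, K01, K20, K11, K30. simpl in K00, K10, K01, K20, K11, K30.
  assert (NZ : lam * m 1%nat 0%nat * (m 2%nat 1%nat - m 1%nat 1%nat) <> 0).
  { intro Z. apply Hdet. unfold det3. rewrite M02, M12, M22, M20. lra. }
  pose proof (nz_r _ _ NZ) as N1. pose proof (nz_r _ _ (nz_l _ _ NZ)) as N10.
  rwK M20.
  assert (C40 : c 4%nat 0%nat = 0).
  { apply (nz_mul (lam^4)); [nzt|]. rewrite H00 in K00. lra. }
  assert (S3 : c 3%nat 1%nat + c 3%nat 0%nat = 0).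
  { apply (nz_mul (lam^3 * m 1%nat 0%nat)); [nzt|]. rewrite H10, C40 in K10. lra. }
  assert (C31' : c 3%nat 1%nat = - c 3%nat 0%nat) by lra.
  assert (C30 : c 3%nat 0%nat = 0).
  { apply (nz_mul (lam^3 * (m 2%nat 1%nat - m 1%nat 1%nat))); [nzt|]. rewrite H01, C40, C31' in K01. lra. }
  assert (C31 : c 3%nat 1%nat = 0) by lra.
  assert (S2 : c 2%nat 2%nat + c 2%nat 1%nat + c 2%nat 0%nat = 0).
  { apply (nz_mul (lam^2 * m 1%nat 0%nat ^2)); [nzt|]. rewrite H20, ?C40, ?C30, ?C31 in K20. lra. }
  assert (C22' : c 2%nat 2%nat = - c 2%nat 1%nat - c 2%nat 0%nat) by lra.
  assert (S21 : c 2%nat 1%nat + 2 * c 2%nat 0%nat = 0).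
  { apply (nz_mul (lam^2 * m 1%nat 0%nat * (m 2%nat 1%nat - m 1%nat 1%nat))); [nzt|].
    rewrite H11, ?C40, ?C30, ?C31, ?C22' in K11. lra. }
  assert (C21' : c 2%nat 1%nat = - 2 * c 2%nat 0%nat) by lra.
  assert (S1 : c 1%nat 3%nat + c 1%nat 2%nat + c 1%nat 1%nat + c 1%nat 0%nat = 0).
  { apply (nz_mul (lam * m 1%nat 0%nat ^3)); [nzt|]. rewrite H30, ?C40, ?C30, ?C31, ?C22', ?C21' in K30. lra. }
  repeat split; assumption.
Qed.

Lemma inv_e2x0 g c m b : (forall p, g p = quartic c p) -> centered_at_line m e2 (join e2 e3) ->
  local_coeffs g m b -> low6 b -> CL2 c.
Proof.
  intros Hg [[Hdet [lam [Hlam Hm3]]] Hl] Hloc [H00 [H10 [H01 [H20 [H11 H30]]]]].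
  unfold mapply, smul, e2, e3, px, py, pz in Hm3; simpl in Hm3. injection Hm3; intros E2 E1 E0.
  unfold on_line, join, cross, dot, mapply, e1, e2, e3, px, py, pz in Hl; simpl in Hl.
  assert (M02 : m 0%nat 2%nat = 0) by lra.
  assert (M12 : m 1%nat 2%nat = lam) by lra.
  assert (M22 : m 2%nat 2%nat = 0) by lra.
  assert (M00 : m 0%nat 0%nat = 0) by lra.
  assert (Hc : forall x y, affine_poly b x y = affine_poly (BE2 lam (m 0%nat 0%nat) (m 0%nat 1%nat) (m 1%nat 0%nat) (m 1%nat 1%nat) (m 2%nat 0%nat) (m 2%nat 1%nat) c) x y).
  { intros x y. rewrite <- Hloc, Hg, <- compE2. f_equal. unfold mapply, px, py, pz; simpl.
    rewrite M02, M12, M22. pair_eq. }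
  destruct (aff_eq _ _ Hc) as [K00 [K10 [K01 [K20 [K11 K30]]]]].
  unfold BE2 in K00, K10, K01, K20, K11, K30. simpl in K00, K10, K01, K20, K11, K30.
  assert (NZ : lam * m 0%nat 1%nat * m 2%nat 0%nat <> 0).
  { intro Z. apply Hdet. unfold det3. rewrite M02, M12, M22, M00. lra. }
  pose proof (nz_r _ _ NZ) as N20. pose proof (nz_r _ _ (nz_l _ _ NZ)) as N01.
  rwK M00.
  assert (C04 : c 0%nat 4%nat = 0).
  { apply (nz_mul (lam^4)); [nzt|]. rewrite H00 in K00. lra. }
  assert (C03 : c 0%nat 3%nat = 0).
  { apply (nz_mul (lam^3 * m 2%nat 0%nat)); [nzt|]. rewrite H10, ?C04 in K10. lra. }
  assert (C13 : c 1%nat 3%nat = 0).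
  { apply (nz_mul (lam^3 * m 0%nat 1%nat)); [nzt|]. rewrite H01, ?C04, ?C03 in K01. lra. }
  assert (C02 : c 0%nat 2%nat = 0).
  { apply (nz_mul (lam^2 * m 2%nat 0%nat ^2)); [nzt|]. rewrite H20, ?C04, ?C03, ?C13 in K20. lra. }
  assert (C12 : c 1%nat 2%nat = 0).
  { apply (nz_mul (lam^2 * m 0%nat 1%nat * m 2%nat 0%nat)); [nzt|]. rewrite H11, ?C04, ?C03, ?C13, ?C02 in K11. lra. }
  assert (C01 : c 0%nat 1%nat = 0).
  { apply (nz_mul (lam * m 2%nat 0%nat ^3)); [nzt|]. rewrite H30, ?C04, ?C03, ?C13, ?C02, ?C12 in K30. lra. }
  repeat split; assumption.
Qed.

Lemma inv_pt2 g c m b : (forall p, g p = quartic c p) -> centered_at m e2 ->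
  local_coeffs g m b -> ord_ge2 b -> CP2 c.
Proof.
  intros Hg [Hdet [lam [Hlam Hm3]]] Hloc [H00 [H10 H01]].
  unfold mapply, smul, e2, e3, px, py, pz in Hm3; simpl in Hm3. injection Hm3; intros E2 E1 E0.
  assert (M02 : m 0%nat 2%nat = 0) by lra.
  assert (M12 : m 1%nat 2%nat = lam) by lra.
  assert (M22 : m 2%nat 2%nat = 0) by lra.
  assert (Hc : forall x y, affine_poly b x y = affine_poly (BE2 lam (m 0%nat 0%nat) (m 0%nat 1%nat) (m 1%nat 0%nat) (m 1%nat 1%nat) (m 2%nat 0%nat) (m 2%nat 1%nat) c) x y).
  { intros x y. rewrite <- Hloc, Hg, <- compE2. f_equal. unfold mapply, px, py, pz; simpl.
    rewrite M02, M12, M22. pair_eq. }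
  destruct (aff_eq _ _ Hc) as [K00 [K10 [K01 _]]].
  unfold BE2 in K00, K10, K01. simpl in K00, K10, K01.
  assert (NZ : lam * (m 0%nat 1%nat * m 2%nat 0%nat - m 0%nat 0%nat * m 2%nat 1%nat) <> 0).
  { intro Z. apply Hdet. unfold det3. rewrite M02, M12, M22. lra. }
  pose proof (nz_r _ _ NZ) as N1. pose proof (nz_l _ _ NZ) as NL.
  assert (C04 : c 0%nat 4%nat = 0).
  { apply (nz_mul (lam^4)); [nzt|]. rewrite H00 in K00. lra. }
  assert (P : m 0%nat 0%nat * c 1%nat 3%nat + m 2%nat 0%nat * c 0%nat 3%nat = 0).
  { apply (nz_mul (lam^3)); [nzt|]. rewrite H10, ?C04 in K10. lra. }
  assert (Q : m 0%nat 1%nat * c 1%nat 3%nat + m 2%nat 1%nat * c 0%nat 3%nat = 0).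
  { apply (nz_mul (lam^3)); [nzt|]. rewrite H01, ?C04 in K01. lra. }
  assert (C03 : c 0%nat 3%nat = 0).
  { apply (nz_mul _ _ N1).
    replace ((m 0%nat 1%nat * m 2%nat 0%nat - m 0%nat 0%nat * m 2%nat 1%nat) * c 0%nat 3%nat)
      with (m 0%nat 1%nat * (m 0%nat 0%nat * c 1%nat 3%nat + m 2%nat 0%nat * c 0%nat 3%nat)
          - m 0%nat 0%nat * (m 0%nat 1%nat * c 1%nat 3%nat + m 2%nat 1%nat * c 0%nat 3%nat)) by ring.
    rewrite P, Q. ring. }
  assert (C13 : c 1%nat 3%nat = 0).
  { apply (nz_mul _ _ N1).
    replace ((m 0%nat 1%nat * m 2%nat 0%nat - m 0%nat 0%nat * m 2%nat 1%nat) * c 1%nat 3%nat)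
      with (m 2%nat 0%nat * (m 0%nat 1%nat * c 1%nat 3%nat + m 2%nat 1%nat * c 0%nat 3%nat)
          - m 2%nat 1%nat * (m 0%nat 0%nat * c 1%nat 3%nat + m 2%nat 0%nat * c 0%nat 3%nat)) by ring.
    rewrite P, Q. ring. }
  repeat split; assumption.
Qed.

Lemma inv_pt3 g c m b : (forall p, g p = quartic c p) -> centered_at m e3 ->
  local_coeffs g m b -> ord_ge2 b -> CP3 c.
Proof.
  intros Hg [Hdet [lam [Hlam Hm3]]] Hloc [H00 [H10 H01]].
  unfold mapply, smul, e3, px, py, pz in Hm3; simpl in Hm3. injection Hm3; intros E2 E1 E0.
  assert (M02 : m 0%nat 2%nat = 0) by lra.
  assert (M12 : m 1%nat 2%nat = 0) by lra.
  assert (M22 : m 2%nat 2%nat = lam) by lra.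
  assert (Hc : forall x y, affine_poly b x y = affine_poly (BE3 lam (m 0%nat 0%nat) (m 0%nat 1%nat) (m 1%nat 0%nat) (m 1%nat 1%nat) (m 2%nat 0%nat) (m 2%nat 1%nat) c) x y).
  { intros x y. rewrite <- Hloc, Hg, <- compE3. f_equal. unfold mapply, px, py, pz; simpl.
    rewrite M02, M12, M22. pair_eq. }
  destruct (aff_eq _ _ Hc) as [K00 [K10 [K01 _]]].
  unfold BE3 in K00, K10, K01. simpl in K00, K10, K01.
  assert (NZ : lam * (m 0%nat 0%nat * m 1%nat 1%nat - m 0%nat 1%nat * m 1%nat 0%nat) <> 0).
  { intro Z. apply Hdet. unfold det3. rewrite M02, M12, M22. lra. }
  pose proof (nz_r _ _ NZ) as N1. pose proof (nz_l _ _ NZ) as NL.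
  assert (C00 : c 0%nat 0%nat = 0).
  { apply (nz_mul (lam^4)); [nzt|]. rewrite H00 in K00. lra. }
  assert (P : m 0%nat 0%nat * c 1%nat 0%nat + m 1%nat 0%nat * c 0%nat 1%nat = 0).
  { apply (nz_mul (lam^3)); [nzt|]. rewrite H10, ?C00 in K10. lra. }
  assert (Q : m 0%nat 1%nat * c 1%nat 0%nat + m 1%nat 1%nat * c 0%nat 1%nat = 0).
  { apply (nz_mul (lam^3)); [nzt|]. rewrite H01, ?C00 in K01. lra. }
  assert (C10 : c 1%nat 0%nat = 0).
  { apply (nz_mul _ _ N1).
    replace ((m 0%nat 0%nat * m 1%nat 1%nat - m 0%nat 1%nat * m 1%nat 0%nat) * c 1%nat 0%nat)
      with (m 1%nat 1%nat * (m 0%nat 0%nat * c 1%nat 0%nat + m 1%nat 0%nat * c 0%nat 1%nat)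
          - m 1%nat 0%nat * (m 0%nat 1%nat * c 1%nat 0%nat + m 1%nat 1%nat * c 0%nat 1%nat)) by ring.
    rewrite P, Q. ring. }
  assert (C01 : c 0%nat 1%nat = 0).
  { apply (nz_mul _ _ N1).
    replace ((m 0%nat 0%nat * m 1%nat 1%nat - m 0%nat 1%nat * m 1%nat 0%nat) * c 0%nat 1%nat)
      with (m 0%nat 0%nat * (m 0%nat 1%nat * c 1%nat 0%nat + m 1%nat 1%nat * c 0%nat 1%nat)
          - m 0%nat 1%nat * (m 0%nat 0%nat * c 1%nat 0%nat + m 1%nat 0%nat * c 0%nat 1%nat)) by ring.
    rewrite P, Q. ring. }
  repeat split; assumption.
Qed.
Definition m_e1y0 : mat3 := fun i j =>
  match i, j with 0%nat, 2%nat => 1 | 1%nat, 1%nat => 1 | 2%nat, 0%nat => 1 | _, _ => 0 end.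
Definition m_e1yz : mat3 := fun i j =>
  match i, j with 0%nat, 2%nat => 1 | 1%nat, 0%nat => 1 | 2%nat, 0%nat => 1 | 2%nat, 1%nat => 1 | _, _ => 0 end.
Definition m_e2 : mat3 := fun i j =>
  match i, j with 0%nat, 1%nat => 1 | 1%nat, 2%nat => 1 | 2%nat, 0%nat => 1 | _, _ => 0 end.
Definition m_e3 : mat3 := fun i j =>
  match i, j with 0%nat, 0%nat => 1 | 1%nat, 1%nat => 1 | 2%nat, 2%nat => 1 | _, _ => 0 end.

Lemma can_e1y0 g c : (forall p, g p = quartic c p) -> CL1 c ->
  exists m b, centered_at_line m e1 (join e1 e3) /\ local_coeffs g m b /\ low6 b.
Proof.
  intros Hg HC. exists m_e1y0, (BE1 1 0 0 0 1 1 0 c). split; [split; [split|]|split].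
  - unfold det3, m_e1y0; simpl; lra.
  - exists 1. split; [lra|]. unfold mapply, smul, m_e1y0, e1, e3, px, py, pz; simpl. pair_eq.
  - unfold on_line, join, cross, dot, mapply, m_e1y0, e1, e3, px, py, pz; simpl; ring.
  - intros x y. rewrite Hg, <- compE1. f_equal. unfold mapply, m_e1y0, px, py, pz; simpl. pair_eq.
  - unfold CL1 in HC. unfold low6, BE1; simpl. repeat split; lra.
Qed.

Lemma can_e1yz g c : (forall p, g p = quartic c p) -> CL3 c ->
  exists m b, centered_at_line m e1 (join e1 e4) /\ local_coeffs g m b /\ low6 b.
Proof.
  intros Hg HC. exists m_e1yz, (BE1 1 0 0 1 0 1 1 c). split; [split; [split|]|split].
  - unfold det3, m_e1yz; simpl; lra.
  - exists 1. split; [lra|]. unfold mapply, smul, m_e1yz, e1, e3, px, py, pz; simpl. pair_eq.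
  - unfold on_line, join, cross, dot, mapply, m_e1yz, e1, e4, px, py, pz; simpl; ring.
  - intros x y. rewrite Hg, <- compE1. f_equal. unfold mapply, m_e1yz, px, py, pz; simpl. pair_eq.
  - unfold CL3 in HC. unfold low6, BE1; simpl. repeat split; lra.
Qed.

Lemma can_e2x0 g c : (forall p, g p = quartic c p) -> CL2 c ->
  exists m b, centered_at_line m e2 (join e2 e3) /\ local_coeffs g m b /\ low6 b.
Proof.
  intros Hg HC. exists m_e2, (BE2 1 0 1 0 0 1 0 c). split; [split; [split|]|split].
  - unfold det3, m_e2; simpl; lra.
  - exists 1. split; [lra|]. unfold mapply, smul, m_e2, e2, e3, px, py, pz; simpl. pair_eq.
  - unfold on_line, join, cross, dot, mapply, m_e2, e1, e2, e3, px, py, pz; simpl; ring.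
  - intros x y. rewrite Hg, <- compE2. f_equal. unfold mapply, m_e2, px, py, pz; simpl. pair_eq.
  - unfold CL2 in HC. unfold low6, BE2; simpl. repeat split; lra.
Qed.

Lemma can_pt2 g c : (forall p, g p = quartic c p) -> CP2 c ->
  exists m b, centered_at m e2 /\ local_coeffs g m b /\ ord_ge2 b.
Proof.
  intros Hg HC. exists m_e2, (BE2 1 0 1 0 0 1 0 c). split; [split|split].
  - unfold det3, m_e2; simpl; lra.
  - exists 1. split; [lra|]. unfold mapply, smul, m_e2, e2, e3, px, py, pz; simpl. pair_eq.
  - intros x y. rewrite Hg, <- compE2. f_equal. unfold mapply, m_e2, px, py, pz; simpl. pair_eq.
  - unfold CP2 in HC. unfold ord_ge2, BE2; simpl. repeat split; lra.
Qed.

Lemma can_pt3 g c : (forall p, g p = quartic c p) -> CP3 c ->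
  exists m b, centered_at m e3 /\ local_coeffs g m b /\ ord_ge2 b.
Proof.
  intros Hg HC. exists m_e3, (BE3 1 1 0 0 1 0 0 c). split; [split|split].
  - unfold det3, m_e3; simpl; lra.
  - exists 1. split; [lra|]. unfold mapply, smul, m_e3, e3, px, py, pz; simpl. pair_eq.
  - intros x y. rewrite Hg, <- compE3. f_equal. unfold mapply, m_e3, px, py, pz; simpl. pair_eq.
  - unfold CP3 in HC. unfold ord_ge2, BE3; simpl. repeat split; lra.
Qed.

Lemma pl_generic (p n : pt) (Cond : (nat -> nat -> R) -> Prop)
  (inv : forall g c m b, (forall q, g q = quartic c q) -> centered_at_line m p n -> local_coeffs g m b -> low6 b -> Cond c)
  (can : forall g c, (forall q, g q = quartic c q) -> Cond c -> exists m b, centered_at_line m p n /\ local_coeffs g m b /\ low6 b)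
  (zero : forall c, Cond c -> quartic c p = 0) :
  (forall g c, (forall q, g q = quartic c q) -> Ipl p n g -> Cond c) /\
  (forall g c, (forall q, g q = quartic c q) -> Cond c -> Ipl p n g) /\
  (forall g c, (forall q, g q = quartic c q) -> Fpl p n g -> Cond c) /\
  (forall g c, (forall q, g q = quartic c q) -> P34 g -> Cond c -> Fpl p n g).
Proof.
  split; [|split; [|split]].
  - intros g c Hg [_ [m [b [Hm [Hloc L]]]]]. apply (inv g c m b Hg Hm Hloc). exact L.
  - intros g c Hg HC. split; [exists c; exact Hg|].
    destruct (can g c Hg HC) as [m [b [Hm [Hloc L]]]]. exists m, b. split; [exact Hm|]. split; [exact Hloc|]. exact L.
  - intros g c Hg [[_ Hnn] [_ [m [b [Hm [Hloc [[H00 [H10 H01]] Ht]]]]]]].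
    apply (inv g c m b Hg Hm Hloc). rewrite tilde00 in Ht. apply aff_nonneg; auto.
    intros x y. rewrite <- Hloc. apply Hnn.
  - intros g c Hg HP HC. split; [exact HP|]. split; [rewrite Hg; apply zero; exact HC|].
    destruct (can g c Hg HC) as [m [b [Hm [Hloc [H00 [H10 [H01 [H20 _]]]]]]]].
    exists m, b. split; [exact Hm|]. split; [exact Hloc|]. split; [repeat split; assumption|].
    rewrite tilde00. exact H20.
Qed.

Lemma zero_e1 c : CL1 c -> quartic c e1 = 0.
Proof. intros [H _]. unfold quartic, e1, px, py, pz; simpl. rewrite H. ring. Qed.
Lemma zero_e1' c : CL3 c -> quartic c e1 = 0.
Proof. intros [H _]. unfold quartic, e1, px, py, pz; simpl. rewrite H. ring. Qed.
Lemma zero_e2 c : CL2 c -> quartic c e2 = 0.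
Proof. intros [H _]. unfold quartic, e2, px, py, pz; simpl. rewrite H. ring. Qed.

Definition PL1 := pl_generic e1 (join e1 e3) CL1 inv_e1y0 can_e1y0 zero_e1.
Definition PL3 := pl_generic e1 (join e1 e4) CL3 inv_e1yz can_e1yz zero_e1'.
Definition PL2 := pl_generic e2 (join e2 e3) CL2 inv_e2x0 can_e2x0 zero_e2.

Lemma Ipt2_C g c : (forall q, g q = quartic c q) -> Ipt e2 g -> CP2 c.
Proof. intros Hg [_ [m [b [Hm [Hloc Ho]]]]]. exact (inv_pt2 g c m b Hg Hm Hloc Ho). Qed.
Lemma Ipt3_C g c : (forall q, g q = quartic c q) -> Ipt e3 g -> CP3 c.
Proof. intros Hg [_ [m [b [Hm [Hloc Ho]]]]]. exact (inv_pt3 g c m b Hg Hm Hloc Ho). Qed.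
Lemma C_Ipt2 g c : (forall q, g q = quartic c q) -> CP2 c -> Ipt e2 g.
Proof. intros Hg HC. split; [exists c; exact Hg|]. exact (can_pt2 g c Hg HC). Qed.
Lemma C_Ipt3 g c : (forall q, g q = quartic c q) -> CP3 c -> Ipt e3 g.
Proof. intros Hg HC. split; [exists c; exact Hg|]. exact (can_pt3 g c Hg HC). Qed.
Lemma C_Fpt2 g c : (forall q, g q = quartic c q) -> P34 g -> CP2 c -> Fpt e2 g.
Proof. intros Hg HP [H _]. split; [exact HP|]. rewrite Hg. unfold quartic, e2, px, py, pz; simpl. rewrite H. ring. Qed.
Lemma C_Fpt3 g c : (forall q, g q = quartic c q) -> P34 g -> CP3 c -> Fpt e3 g.
Proof. intros Hg HP [H _]. split; [exact HP|]. rewrite Hg. unfold quartic, e3, px, py, pz; simpl. rewrite H. ring. Qed.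

Lemma Fpt2_C g c : (forall q, g q = quartic c q) -> Fpt e2 g -> CP2 c.
Proof.
  intros Hg [[_ Hnn] H0]. rewrite Hg in H0. unfold quartic, e2, px, py, pz in H0; simpl in H0.
  assert (C04 : c 0%nat 4%nat = 0) by lra.
  split; [exact C04|split].
  - apply (L1 _ (c 2%nat 2%nat) (c 3%nat 1%nat) (c 4%nat 0%nat)). intro t.
    pose proof (Hnn (t, 1, 0)) as H. rewrite Hg in H. unfold quartic, px, py, pz in H; simpl in H.
    rewrite C04 in H. lra.
  - apply (L1 _ (c 0%nat 2%nat) (c 0%nat 1%nat) (c 0%nat 0%nat)). intro t.
    pose proof (Hnn (0, 1, t)) as H. rewrite Hg in H. unfold quartic, px, py, pz in H; simpl in H.
    rewrite C04 in H. lra.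
Qed.

Lemma Fpt3_C g c : (forall q, g q = quartic c q) -> Fpt e3 g -> CP3 c.
Proof.
  intros Hg [[_ Hnn] H0]. rewrite Hg in H0. unfold quartic, e3, px, py, pz in H0; simpl in H0.
  assert (C00 : c 0%nat 0%nat = 0) by lra.
  split; [exact C00|split].
  - apply (L1 _ (c 2%nat 0%nat) (c 3%nat 0%nat) (c 4%nat 0%nat)). intro t.
    pose proof (Hnn (t, 0, 1)) as H. rewrite Hg in H. unfold quartic, px, py, pz in H; simpl in H.
    rewrite C00 in H. lra.
  - apply (L1 _ (c 0%nat 2%nat) (c 0%nat 3%nat) (c 0%nat 4%nat)). intro t.
    pose proof (Hnn (0, t, 1)) as H. rewrite Hg in H. unfold quartic, px, py, pz in H; simpl in H.
    rewrite C00 in H. lra.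
Qed.
Ltac dsplit := repeat match goal with H : _ /\ _ |- _ => destruct H end.

Lemma CL1_lin a c1 c2 : CL1 c1 -> CL1 c2 -> CL1 (fun i j => a * c1 i j + c2 i j).
Proof. unfold CL1; simpl; intros; dsplit; repeat split; nra. Qed.
Lemma CL2_lin a c1 c2 : CL2 c1 -> CL2 c2 -> CL2 (fun i j => a * c1 i j + c2 i j).
Proof. unfold CL2; simpl; intros; dsplit; repeat split; nra. Qed.
Lemma CL3_lin a c1 c2 : CL3 c1 -> CL3 c2 -> CL3 (fun i j => a * c1 i j + c2 i j).
Proof. unfold CL3; simpl; intros; dsplit; repeat split; nra. Qed.
Lemma CP2_lin a c1 c2 : CP2 c1 -> CP2 c2 -> CP2 (fun i j => a * c1 i j + c2 i j).
Proof. unfold CP2; simpl; intros; dsplit; repeat split; nra. Qed.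
Lemma CP3_lin a c1 c2 : CP3 c1 -> CP3 c2 -> CP3 (fun i j => a * c1 i j + c2 i j).
Proof. unfold CP3; simpl; intros; dsplit; repeat split; nra. Qed.

Definition CondT (i : nat) (c : nat -> nat -> R) : Prop :=
  match i with
  | 1%nat => CL1 c
  | 2%nat => CP2 c /\ CL1 c
  | 3%nat => CL1 c /\ CL2 c
  | _ => (CP2 c /\ CP3 c) /\ CL3 c
  end.

Definition CS (i : nat) (g : pt -> R) : Prop :=
  exists c, (forall p, g p = quartic c p) /\ CondT i c.

Lemma CondT_lin i a c1 c2 : CondT i c1 -> CondT i c2 -> CondT i (fun i j => a * c1 i j + c2 i j).
Proof.
  destruct i as [|[|[|[|i]]]]; simpl; intros; dsplit;
  repeat split; try (apply CL1_lin; assumption); try (apply CL2_lin; assumption);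
  try (apply CL3_lin; assumption); try (apply CP2_lin; assumption); try (apply CP3_lin; assumption).
Qed.

Lemma CondT_zero i : CondT i (fun _ _ => 0).
Proof. destruct i as [|[|[|[|i]]]]; unfold CondT, CL1, CL2, CL3, CP2, CP3; repeat split; lra. Qed.

Lemma span_CS i F f : (forall g, F g -> CS i g) -> in_span F f -> CS i f.
Proof.
  intros HF [l [Hl Hf]].
  assert (H : CS i (lincomb l)).
  { clear Hf. induction l as [|[a g] t IH].
    - exists (fun _ _ => 0). split; [intro p; simpl; rewrite quartic_zero; reflexivity | apply CondT_zero].
    - destruct (HF g (Hl (a, g) (in_eq _ _))) as [c1 [H1 C1]].
      destruct IH as [c2 [H2 C2]]. { intros q Hq. apply Hl. right. exact Hq. }
      exists (fun i j => a * c1 i j + c2 i j). split.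
      + intro p. simpl. rewrite quartic_lin, H1, H2. reflexivity.
      + apply CondT_lin; assumption. }
  destruct H as [c [Hc C]]. exists c. split; [intro p; rewrite Hf; apply Hc | exact C].
Qed.

Lemma FS_CS i g : (1 <= i <= 4)%nat -> FS (Tconf i) g -> CS i g.
Proof.
  intros Hi [Hpts Hprs].
  destruct i as [|[|[|[|[|i]]]]]; try lia; simpl in Hpts, Hprs.
  - assert (HF := Hprs _ (or_introl eq_refl)). simpl in HF.
    destruct HF as [[[c Hc] Hnn] Hr] eqn:E. exists c. split; [exact Hc|].
    simpl. exact (proj1 (proj2 (proj2 PL1)) g c Hc HF).
  - assert (HF := Hprs _ (or_introl eq_refl)). simpl in HF.
    destruct HF as [[[c Hc] Hnn] Hr] eqn:E. exists c. split; [exact Hc|].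
    simpl. split; [apply (Fpt2_C g c Hc (Hpts _ (or_introl eq_refl)))|].
    exact (proj1 (proj2 (proj2 PL1)) g c Hc HF).
  - assert (HF := Hprs _ (or_introl eq_refl)). simpl in HF.
    assert (HF2 := Hprs _ (or_intror (or_introl eq_refl))). simpl in HF2.
    destruct HF as [[[c Hc] Hnn] Hr] eqn:E. exists c. split; [exact Hc|].
    simpl. split; [exact (proj1 (proj2 (proj2 PL1)) g c Hc HF)|].
    exact (proj1 (proj2 (proj2 PL2)) g c Hc HF2).
  - assert (HF := Hprs _ (or_introl eq_refl)). simpl in HF.
    destruct HF as [[[c Hc] Hnn] Hr] eqn:E. exists c. split; [exact Hc|].
    simpl. split; [split|].
    + apply (Fpt2_C g c Hc (Hpts _ (or_introl eq_refl))).
    + apply (Fpt3_C g c Hc (Hpts _ (or_intror (or_introl eq_refl)))).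
    + exact (proj1 (proj2 (proj2 PL3)) g c Hc HF).
Qed.

Lemma CS_FS i g : (1 <= i <= 4)%nat -> P34 g -> CS i g -> FS (Tconf i) g.
Proof.
  intros Hi HP [c [Hc C]].
  destruct i as [|[|[|[|[|i]]]]]; try lia; simpl in C.
  - split; intros s Hs; simpl in Hs.
    + destruct Hs.
    + destruct Hs as [<-|[]]. exact (proj2 (proj2 (proj2 PL1)) g c Hc HP C).
  - destruct C as [C1 C2]. split; intros s Hs; simpl in Hs.
    + destruct Hs as [<-|[]]. exact (C_Fpt2 g c Hc HP C1).
    + destruct Hs as [<-|[]]. exact (proj2 (proj2 (proj2 PL1)) g c Hc HP C2).
  - destruct C as [C1 C2]. split; intros s Hs; simpl in Hs.
    + destruct Hs.
    + destruct Hs as [<-|[<-|[]]].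
      * exact (proj2 (proj2 (proj2 PL1)) g c Hc HP C1).
      * exact (proj2 (proj2 (proj2 PL2)) g c Hc HP C2).
  - destruct C as [[C1 C2] C3]. split; intros s Hs; simpl in Hs.
    + destruct Hs as [<-|[<-|[]]].
      * exact (C_Fpt2 g c Hc HP C1).
      * exact (C_Fpt3 g c Hc HP C2).
    + destruct Hs as [<-|[]]. exact (proj2 (proj2 (proj2 PL3)) g c Hc HP C3).
Qed.

Lemma IS_CS i g : (1 <= i <= 4)%nat -> IS (Tconf i) g -> CS i g.
Proof.
  intros Hi [[c Hc] [Hpts Hprs]]. exists c. split; [exact Hc|].
  destruct i as [|[|[|[|[|i]]]]]; try lia; simpl.
  - exact (proj1 PL1 g c Hc (Hprs _ (or_introl eq_refl))).
  - split; [exact (Ipt2_C g c Hc (Hpts _ (or_introl eq_refl)))|].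
    exact (proj1 PL1 g c Hc (Hprs _ (or_introl eq_refl))).
  - split; [exact (proj1 PL1 g c Hc (Hprs _ (or_introl eq_refl)))|].
    exact (proj1 PL2 g c Hc (Hprs _ (or_intror (or_introl eq_refl)))).
  - split; [split|].
    + exact (Ipt2_C g c Hc (Hpts _ (or_introl eq_refl))).
    + exact (Ipt3_C g c Hc (Hpts _ (or_intror (or_introl eq_refl)))).
    + exact (proj1 PL3 g c Hc (Hprs _ (or_introl eq_refl))).
Qed.

Lemma CS_IS i g : (1 <= i <= 4)%nat -> CS i g -> IS (Tconf i) g.
Proof.
  intros Hi [c [Hc C]]. split; [exists c; exact Hc|].
  destruct i as [|[|[|[|[|i]]]]]; try lia; simpl in C.
  - split; intros s Hs; simpl in Hs.
    + destruct Hs.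
    + destruct Hs as [<-|[]]. exact (proj1 (proj2 PL1) g c Hc C).
  - destruct C as [C1 C2]. split; intros s Hs; simpl in Hs.
    + destruct Hs as [<-|[]]. exact (C_Ipt2 g c Hc C1).
    + destruct Hs as [<-|[]]. exact (proj1 (proj2 PL1) g c Hc C2).
  - destruct C as [C1 C2]. split; intros s Hs; simpl in Hs.
    + destruct Hs.
    + destruct Hs as [<-|[<-|[]]].
      * exact (proj1 (proj2 PL1) g c Hc C1).
      * exact (proj1 (proj2 PL2) g c Hc C2).
  - destruct C as [[C1 C2] C3]. split; intros s Hs; simpl in Hs.
    + destruct Hs as [<-|[<-|[]]].
      * exact (C_Ipt2 g c Hc C1).
      * exact (C_Ipt3 g c Hc C2).
    + destruct Hs as [<-|[]]. exact (proj1 (proj2 PL3) g c Hc C3).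
Qed.
Lemma sq_P34 (q : pt -> R) c : (forall p, (q p)^2 = quartic c p) -> P34 (fun p => (q p)^2).
Proof. intros H. split; [exists c; exact H | intros p; apply pow2_ge_0]. Qed.

Lemma gen_FS i (q : pt -> R) c : (1 <= i <= 4)%nat -> (forall p, (q p)^2 = quartic c p) -> CondT i c ->
  FS (Tconf i) (fun p => (q p)^2).
Proof. intros Hi H C. apply CS_FS; [exact Hi | apply (sq_P34 q c H) | exists c; split; [exact H | exact C]]. Qed.

Definition q1 (p : pt) := px p * py p.
Definition q2 (p : pt) := px p * py p + py p * py p.
Definition q3 (p : pt) := px p * py p + py p * pz p.
Definition q4 (p : pt) := px p * py p + pz p * pz p.
Definition q5 (p : pt) := py p * py p.
Definition q6 (p : pt) := py p * py p + py p * pz p.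
Definition q7 (p : pt) := py p * pz p.
Definition q8 (p : pt) := py p * pz p + pz p * pz p.
Definition q9 (p : pt) := pz p * pz p.
Definition r1 (p : pt) := px p * py p - px p * pz p.
Definition r2 (p : pt) := px p * py p - px p * pz p + py p * pz p.

Definition k1 : nat -> nat -> R := fun i j => match i, j with 2%nat, 2%nat => 1 | _, _ => 0 end.
Definition k2 : nat -> nat -> R := fun i j => match i, j with 2%nat, 2%nat => 1 | 1%nat, 3%nat => 2 | 0%nat, 4%nat => 1 | _, _ => 0 end.
Definition k3 : nat -> nat -> R := fun i j => match i, j with 2%nat, 2%nat => 1 | 1%nat, 2%nat => 2 | 0%nat, 2%nat => 1 | _, _ => 0 end.
Definition k4 : nat -> nat -> R := fun i j => match i, j with 2%nat, 2%nat => 1 | 1%nat, 1%nat => 2 | 0%nat, 0%nat => 1 | _, _ => 0 end.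
Definition k5 : nat -> nat -> R := fun i j => match i, j with 0%nat, 4%nat => 1 | _, _ => 0 end.
Definition k6 : nat -> nat -> R := fun i j => match i, j with 0%nat, 4%nat => 1 | 0%nat, 3%nat => 2 | 0%nat, 2%nat => 1 | _, _ => 0 end.
Definition k7 : nat -> nat -> R := fun i j => match i, j with 0%nat, 2%nat => 1 | _, _ => 0 end.
Definition k8 : nat -> nat -> R := fun i j => match i, j with 0%nat, 2%nat => 1 | 0%nat, 1%nat => 2 | 0%nat, 0%nat => 1 | _, _ => 0 end.
Definition k9 : nat -> nat -> R := fun i j => match i, j with 0%nat, 0%nat => 1 | _, _ => 0 end.
Definition l1 : nat -> nat -> R := fun i j => match i, j with 2%nat, 2%nat => 1 | 2%nat, 1%nat => -2 | 2%nat, 0%nat => 1 | _, _ => 0 end.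
Definition l2 : nat -> nat -> R := fun i j => match i, j with 2%nat, 2%nat => 1 | 2%nat, 0%nat => 1 | 0%nat, 2%nat => 1
  | 2%nat, 1%nat => -2 | 1%nat, 2%nat => 2 | 1%nat, 1%nat => -2 | _, _ => 0 end.

Ltac qid := intro p; unfold quartic, px, py, pz; simpl; ring.
Lemma e_q1 p : (q1 p)^2 = quartic k1 p. Proof. unfold q1, k1; revert p; qid. Qed.
Lemma e_q2 p : (q2 p)^2 = quartic k2 p. Proof. unfold q2, k2; revert p; qid. Qed.
Lemma e_q3 p : (q3 p)^2 = quartic k3 p. Proof. unfold q3, k3; revert p; qid. Qed.
Lemma e_q4 p : (q4 p)^2 = quartic k4 p. Proof. unfold q4, k4; revert p; qid. Qed.
Lemma e_q5 p : (q5 p)^2 = quartic k5 p. Proof. unfold q5, k5; revert p; qid. Qed.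
Lemma e_q6 p : (q6 p)^2 = quartic k6 p. Proof. unfold q6, k6; revert p; qid. Qed.
Lemma e_q7 p : (q7 p)^2 = quartic k7 p. Proof. unfold q7, k7; revert p; qid. Qed.
Lemma e_q8 p : (q8 p)^2 = quartic k8 p. Proof. unfold q8, k8; revert p; qid. Qed.
Lemma e_q9 p : (q9 p)^2 = quartic k9 p. Proof. unfold q9, k9; revert p; qid. Qed.
Lemma e_r1 p : (r1 p)^2 = quartic l1 p. Proof. unfold r1, l1; revert p; qid. Qed.
Lemma e_r2 p : (r2 p)^2 = quartic l2 p. Proof. unfold r2, l2; revert p; qid. Qed.

Ltac condt := unfold CondT, CL1, CL2, CL3, CP2, CP3, k1, k2, k3, k4, k5, k6, k7, k8, k9, l1, l2; repeat split; lra.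

Ltac memb := intros q Hq; simpl in Hq; repeat (destruct Hq as [<-|Hq]); [..|destruct Hq]; simpl.

Lemma dec1 f : CS 1 f -> in_span (FS (Tconf 1)) f.
Proof.
  intros [c [Hc C]]. simpl in C. destruct C as [C40 [C31 [C30 [C20 [C21 C10]]]]].
  set (a2 := c 1%nat 3%nat / 2). set (a3 := c 1%nat 2%nat / 2). set (a4 := c 1%nat 1%nat / 2).
  set (a6 := c 0%nat 3%nat / 2). set (a8 := c 0%nat 1%nat / 2).
  exists [(c 2%nat 2%nat - a2 - a3 - a4, fun p => (q1 p)^2); (a2, fun p => (q2 p)^2); (a3, fun p => (q3 p)^2);
          (a4, fun p => (q4 p)^2); (c 0%nat 4%nat - a2 - a6, fun p => (q5 p)^2); (a6, fun p => (q6 p)^2);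
          (c 0%nat 2%nat - a3 - a6 - a8, fun p => (q7 p)^2); (a8, fun p => (q8 p)^2);
          (c 0%nat 0%nat - a4 - a8, fun p => (q9 p)^2)].
  split.
  - memb.
    + apply (gen_FS 1 q1 k1); [lia| exact e_q1 | condt].
    + apply (gen_FS 1 q2 k2); [lia| exact e_q2 | condt].
    + apply (gen_FS 1 q3 k3); [lia| exact e_q3 | condt].
    + apply (gen_FS 1 q4 k4); [lia| exact e_q4 | condt].
    + apply (gen_FS 1 q5 k5); [lia| exact e_q5 | condt].
    + apply (gen_FS 1 q6 k6); [lia| exact e_q6 | condt].
    + apply (gen_FS 1 q7 k7); [lia| exact e_q7 | condt].
    + apply (gen_FS 1 q8 k8); [lia| exact e_q8 | condt].
    + apply (gen_FS 1 q9 k9); [lia| exact e_q9 | condt].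
  - intro p. rewrite Hc. unfold lincomb, quartic, q1, q2, q3, q4, q5, q6, q7, q8, q9, a2, a3, a4, a6, a8, px, py, pz.
    simpl. rewrite C40, C31, C30, C20, C21, C10. field.
Qed.

Lemma dec2 f : CS 2 f -> in_span (FS (Tconf 2)) f.
Proof.
  intros [c [Hc C]]. simpl in C. destruct C as [[C04 [C13 C03]] [C40 [C31 [C30 [C20 [C21 C10]]]]]].
  set (a3 := c 1%nat 2%nat / 2). set (a4 := c 1%nat 1%nat / 2). set (a8 := c 0%nat 1%nat / 2).
  exists [(c 2%nat 2%nat - a3 - a4, fun p => (q1 p)^2); (a3, fun p => (q3 p)^2);
          (a4, fun p => (q4 p)^2);
          (c 0%nat 2%nat - a3 - a8, fun p => (q7 p)^2); (a8, fun p => (q8 p)^2);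
          (c 0%nat 0%nat - a4 - a8, fun p => (q9 p)^2)].
  split.
  - memb.
    + apply (gen_FS 2 q1 k1); [lia| exact e_q1 | condt].
    + apply (gen_FS 2 q3 k3); [lia| exact e_q3 | condt].
    + apply (gen_FS 2 q4 k4); [lia| exact e_q4 | condt].
    + apply (gen_FS 2 q7 k7); [lia| exact e_q7 | condt].
    + apply (gen_FS 2 q8 k8); [lia| exact e_q8 | condt].
    + apply (gen_FS 2 q9 k9); [lia| exact e_q9 | condt].
  - intro p. rewrite Hc. unfold lincomb, quartic, q1, q3, q4, q7, q8, q9, a3, a4, a8, px, py, pz.
    simpl. rewrite C04, C13, C03, C40, C31, C30, C20, C21, C10. field.
Qed.

Lemma dec3 f : CS 3 f -> in_span (FS (Tconf 3)) f.
Proof.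
  intros [c [Hc C]]. simpl in C.
  destruct C as [[C40 [C31 [C30 [C20 [C21 C10]]]]] [C04 [C03 [C13 [C02 [C12 C01]]]]]].
  set (a4 := c 1%nat 1%nat / 2).
  exists [(c 2%nat 2%nat - a4, fun p => (q1 p)^2); (a4, fun p => (q4 p)^2);
          (c 0%nat 0%nat - a4, fun p => (q9 p)^2)].
  split.
  - memb.
    + apply (gen_FS 3 q1 k1); [lia| exact e_q1 | condt].
    + apply (gen_FS 3 q4 k4); [lia| exact e_q4 | condt].
    + apply (gen_FS 3 q9 k9); [lia| exact e_q9 | condt].
  - intro p. rewrite Hc. unfold lincomb, quartic, q1, q4, q9, a4, px, py, pz.
    simpl. rewrite C40, C31, C30, C20, C21, C10, C04, C03, C13, C02, C12, C01. field.
Qed.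

Lemma dec4 f : CS 4 f -> in_span (FS (Tconf 4)) f.
Proof.
  intros [c [Hc C]]. simpl in C.
  destruct C as [[[C04 [C13 C03]] [C00 [C10 C01]]] [C40 [C31 [C30 [S2 [S21 S1]]]]]].
  assert (C21 : c 2%nat 1%nat = -2 * c 2%nat 0%nat) by lra.
  assert (C22 : c 2%nat 2%nat = c 2%nat 0%nat) by lra.
  assert (C12 : c 1%nat 2%nat = - c 1%nat 1%nat) by lra.
  exists [(c 2%nat 0%nat + c 1%nat 1%nat / 2, fun p => (r1 p)^2); (c 0%nat 2%nat + c 1%nat 1%nat / 2, fun p => (q7 p)^2);
          (- (c 1%nat 1%nat / 2), fun p => (r2 p)^2)].
  split.
  - memb.
    + apply (gen_FS 4 r1 l1); [lia| exact e_r1 | condt].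
    + apply (gen_FS 4 q7 k7); [lia| exact e_q7 | condt].
    + apply (gen_FS 4 r2 l2); [lia| exact e_r2 | condt].
  - intro p. rewrite Hc. unfold lincomb, quartic, r1, r2, q7, px, py, pz.
    simpl. rewrite C04, C13, C03, C00, C10, C01, C40, C31, C30, C21, C22, C12. field.
Qed.

Theorem mainTheorem10 :
  forall i : nat, (1 <= i <= 4)%nat ->
    forall f : pt -> R, in_span (FS (Tconf i)) f <-> IS (Tconf i) f.
Proof.
  intros i Hi f. split.
  - intro H. apply CS_IS; [exact Hi|]. apply (span_CS i (FS (Tconf i))); [|exact H].
    intros g Hg. apply FS_CS; assumption.
  - intro H. apply IS_CS in H; [|exact Hi].
    destruct i as [|[|[|[|[|i]]]]]; try lia.
    + apply dec1; exact H.
    + apply dec2; exact H.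
    + apply dec3; exact H.
    + apply dec4; exact H.
Qed.
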